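(* Assume $\bar K/\bar E$ is an unramified quadratic field extension, and let $c_0\in\bar K$ with $\mathrm{Tr}(c_0)=0$ and $v(c_0)=0$. Then: (i) the space $\mathcal F_{c_0}^{\mathrm{SL}_2(\mathcal O_E)}$ is one-dimensional, spanned by $\delta_{\mathcal O}:=\delta_{\bar Q(c_0)(\mathcal O_{\bar K})}$; (ii) $T_1(t)\delta_{\mathcal O}=0$.
   Context: Let $\bar E$ be a non-archimedean local field with ring of integers $\mathcal O_{\bar E}$, residue field of characteristic $\neq2$ and size $q$. Let $\mathcal O_E$ be a commutative ring with a surjection $\mathcal O_E\to\mathcal O_{\bar E}$ whose kernel $N\mathcal O_E$ is a square-zero ideal free of rank 1 over $\mathcal O_{\bar E}$; $E$ is the localization of $\mathcal O_E$ at all non-zero-divisors, a square-zero extension of $\bar E$ by $NE$. Let $\bar K$ be a quadratic extension of $\bar E$ with integers $\mathcal O_{\bar K}$ and $\mathcal O_K$ a flat $\mathcal O_E$-algebra with $\mathcal O_K\otimes_{\mathcal O_E}\mathcal O_{\bar E}\cong\mathcal O_{\bar K}$; $K=\mathcal O_K\otimes_{\mathcal O_E}E$, $NK=K\cdot NE$, $\bar K=K/NK$, $x\mapsto\bar x$ reduction. $\mathrm{Tr},\mathrm{Nm}$ trace and norm, $\iota(x)=\mathrm{Tr}(x)-x$, $\langle a,b\rangle=\mathrm{Tr}(a\iota(b))$; $v$ is the normalized valuation of $\bar K$. Let $t\in\mathcal O_E$ map to a uniformizer of $\mathcal O_{\bar E}$, and let $\psi_E:E\to\mathbb C^*$ be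 an additive character trivial on $\mathcal O_E$ and nontrivial on $t^{-1}N\mathcal O_E$. For $v=(x_1,x_2)\in K^2$ (row vectors) set $\det(\iota(v),v)=\iota(x_1)x_2-\iota(x_2)x_1$ and $B(v,w)=\tfrac12(\langle x_1,w_2\rangle-\langle w_1,x_2\rangle)$. For $c_0\in\bar K$ with $\mathrm{Tr}(c_0)=0$: $\bar Q(c_0)=\{\bar v\in\bar K^2:\det(\iota(\bar v),\bar v)=c_0\}$, $\bar Q(c_0)(\mathcal O_{\bar K})=\bar Q(c_0)\cap\mathcal O_{\bar K}^2$, $\widetilde Q(c_0)$ its preimage in $K^2$. $\mathcal F_{c_0}$ is the space of locally constant $\phi:\widetilde Q(c_0)\to\mathbb C$ with $\phi(v+n)=\psi_E(B(v,n))\phi(v)$ whenever $n\in(NK)^2$ and $v,v+n\in\widetilde Q(c_0)$, whose support has compact image in $\bar Q(c_0)$; $\mathrm{SL}_2(E)$ acts by $(r(g)\phi)(v)=\phi(vg)$. For a compact open $S\subset\bar Q(c_0)(\mathcal O_{\bar K})$, $\delta_S\in\mathcal F_{c_0}$ is the unique element vanishing at $v$ with $\bar v\notin S$ and equal to $1$ at every $v\in\mathcal O_K^2$ with $\bar v\in S$. The Hecke operator on $\mathcal F_{c_0}^{\mathrm{SL}_2(\mathcal O_E)}$ is $T_1(t)\phi=\sum_{h\in\mathrm{SL}_2(\mathcal O_E)\operatorname{diag}(t,t^{-1})\mathrm{SL}_2(\mathcal O_E)/\mathrm{SL}_2(\mathcal O_E)}r(h)\phi$. *)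

(* Defs.v *)
From HB Require Import structures.
From mathcomp Require Import all_boot all_algebra.
From mathcomp Require Import reals.
From mathcomp.real_closed Require Import complex.
Set Implicit Arguments. Unset Strict Implicit. Unset Printing Implicit Defensive.
Import GRing.Theory.
Local Open Scope ring_scope.

(* Quadratic algebras  R[w] = R ++ R w  with  w^2 = a w + b,  elements are    *)
(* pairs (x, y) standing for x + y w.  Used for K = E[w] and Kbar = Ebar[w].  *)
Section Quad.
Variables (R : comNzRingType) (a b : R).

Definition qadd (z w : R * R) : R * R := (z.1 + w.1, z.2 + w.2).
Definition qopp (z : R * R) : R * R := (- z.1, - z.2).
Definition qsub (z w : R * R) : R * R := qadd z (qopp w).
Definition qmul (z w : R * R) : R * R :=
  (z.1 * w.1 + b * z.2 * w.2, z.1 * w.2 + z.2 * w.1 + a * z.2 * w.2).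
Definition qscal (e : R) (z : R * R) : R * R := (e * z.1, e * z.2).
Definition qemb (e : R) : R * R := (e, 0).
(* trace of multiplication by x + y w in the basis (1, w) *)
Definition qtr (z : R * R) : R := 2%:R * z.1 + a * z.2.
Definition qiota (z : R * R) : R * R := qsub (qemb (qtr z)) z.
Definition qpair (u v : R * R) : R := qtr (qmul u (qiota v)).
(* det(iota(v), v) = iota(x1) x2 - iota(x2) x1 for v = (x1, x2) *)
Definition qdet (v : (R * R) * (R * R)) : R * R :=
  qsub (qmul (qiota v.1) v.2) (qmul (qiota v.2) v.1).
End Quad.

(*  E    : the ring E (localization of O_E), with O_E given as a subring OE.  *)
(*  Ebar : the local field, red : E -> Ebar reduction,                        *)
(*  O_Ebar = red(O_E), pi = red t.                                            *)
Section Setting.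
Variables (E : comUnitRingType) (Ebar : fieldType) (red : {rmorphism E -> Ebar}).
Variables (OE : pred E) (N t : E).

Definition OEbar (x : Ebar) : Prop := exists y, OE y /\ red y = x.

Definition is_subring (P : pred E) : Prop :=
  [/\ P 0, P 1, (forall x y, P x -> P y -> P (x + y)),
      (forall x, P x -> P (- x)) & (forall x y, P x -> P y -> P (x * y))].

Definition nzd (s : E) : Prop := OE s /\ forall y, OE y -> s * y = 0 -> y = 0.

(* Ebar is a non-archimedean local field with ring of integers OEbar and     *)
(* uniformizer pi = red t: discretely valued, complete, finite residue field *)
(* of characteristic <> 2.                                                    *)
Definition local_field_axioms : Prop :=
  let pi := red t in
  [/\ (forall x : Ebar, x != 0 ->
         exists (u : Ebar) (n : int), [/\ OEbar u, OEbar u^-1 & x = u * pi ^ n]),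
      ~ OEbar pi^-1,
      (* completeness of O_Ebar for the pi-adic topology *)
      (forall s : nat -> Ebar, (forall n, OEbar (s n)) ->
         (forall n, exists y, OEbar y /\ s n.+1 - s n = pi ^+ n * y) ->
         exists l, OEbar l /\ forall n, exists y, OEbar y /\ l - s n = pi ^+ n * y),
      (* finite residue field O_Ebar / pi *)
      (exists rs : seq Ebar, forall x, OEbar x ->
         exists r, [/\ r \in rs, OEbar r & exists y, OEbar y /\ x - r = pi * y]) &
      (2%:R != 0 :> Ebar /\ OEbar (2%:R)^-1)].

Definition setting_axioms : Prop :=
  [/\ [/\ is_subring OE, OE N & OE t],
      N * N = 0 /\
      (forall x, OE x -> (red x = 0 <-> exists y, OE y /\ x = N * y)),
      (* N O_E is free of rank 1 over O_Ebar *)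
      (forall x, OE x -> (x * N = 0 <-> red x = 0)),
      (* E is the localization of O_E at all non-zero-divisors *)
      (forall s, nzd s -> s \is a GRing.unit) /\
      (forall e, exists x s, [/\ OE x, nzd s & e = x / s]) &
      local_field_axioms].

(* Unramified quadratic extension Kbar = Ebar[w], w^2 = abar w + bbar, with   *)
(* O_K = O_E[w] (so O_Kbar = O_Ebar[w]); unramified: the reduction of        *)
(* X^2 - a X - b modulo pi is irreducible (for a quadratic: has no root).     *)
Definition unramified_quadratic (a b : E) : Prop :=
  [/\ OE a, OE b &
      forall x : Ebar, OEbar x ->
        ~ exists y, OEbar y /\ x ^+ 2 - red a * x - red b = red t * y].

Definition good_character (C : fieldType) (psi : E -> C) : Prop :=
  [/\ (forall x y, psi (x + y) = psi x * psi y),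
      (forall x, psi x != 0),
      (forall x, OE x -> psi x = 1) &
      exists x, OE x /\ psi (t^-1 * N * x) != 1].

Definition redK (z : E * E) : Ebar * Ebar := (red z.1, red z.2).
Definition redV (v : (E * E) * (E * E)) := (redK v.1, redK v.2).

Definition OK (z : E * E) : Prop := OE z.1 /\ OE z.2.
Definition OKbar (z : Ebar * Ebar) : Prop := OEbar z.1 /\ OEbar z.2.
Definition OK2 (v : (E * E) * (E * E)) : Prop := OK v.1 /\ OK v.2.
Definition OKbar2 (v : (Ebar * Ebar) * (Ebar * Ebar)) : Prop :=
  OKbar v.1 /\ OKbar v.2.

Definition NE (x : E) : Prop := exists e, x = N * e.
Definition NK (z : E * E) : Prop := NE z.1 /\ NE z.2.
Definition NK2 (v : (E * E) * (E * E)) : Prop := NK v.1 /\ NK v.2.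

Definition vadd (v w : (E * E) * (E * E)) :=
  (qadd v.1 w.1, qadd v.2 w.2).
Definition vsub (v w : (E * E) * (E * E)) :=
  (qsub v.1 w.1, qsub v.2 w.2).
Definition vscal (e : E) (v : (E * E) * (E * E)) := (qscal e v.1, qscal e v.2).

(* row vector times matrix: (x1, x2) g *)
Definition vact (v : (E * E) * (E * E)) (g : 'M[E]_2) : (E * E) * (E * E) :=
  (qadd (qscal (g 0 0) v.1) (qscal (g 1 0) v.2),
   qadd (qscal (g 0 1) v.1) (qscal (g 1 1) v.2)).

Section Quadratic.
Variables (a b : E).

Definition Qbar (c0 : Ebar * Ebar) (w : (Ebar * Ebar) * (Ebar * Ebar)) : Prop :=
  qdet (red a) (red b) w = c0.
Definition QbarO (c0 : Ebar * Ebar) w : Prop := Qbar c0 w /\ OKbar2 w.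
Definition Qtilde (c0 : Ebar * Ebar) (v : (E * E) * (E * E)) : Prop :=
  Qbar c0 (redV v).

Definition Bform (v w : (E * E) * (E * E)) : E :=
  (2%:R)^-1 * (qpair a b v.1 w.2 - qpair a b w.1 v.2).

Definition close (n : nat) (v w : (E * E) * (E * E)) : Prop :=
  let d := vsub v w in
  [/\ exists y, OE y /\ d.1.1 = t ^+ n * y, exists y, OE y /\ d.1.2 = t ^+ n * y,
      exists y, OE y /\ d.2.1 = t ^+ n * y & exists y, OE y /\ d.2.2 = t ^+ n * y].

(* the space F_{c0}: functions on tilde Q(c0) (represented as functions on K^2,
   only the values on tilde Q(c0) matter) *)
Definition in_F (C : fieldType) (psi : E -> C) (c0 : Ebar * Ebar)
    (phi : (E * E) * (E * E) -> C) : Prop :=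
  [/\
      (forall v, Qtilde c0 v -> exists n : nat,
         forall w, Qtilde c0 w -> close n w v -> phi w = phi v),
      (forall v n, NK2 n -> Qtilde c0 v -> Qtilde c0 (vadd v n) ->
         phi (vadd v n) = psi (Bform v n) * phi v) &
      (* support has compact (= bounded) image in bar Q(c0) *)
      (exists m : nat, forall v, Qtilde c0 v -> phi v != 0 ->
         OKbar2 (redV (vscal (t ^+ m) v)))].

Definition inSL2 (g : 'M[E]_2) : Prop := \det g = 1.
Definition inSL2O (g : 'M[E]_2) : Prop := inSL2 g /\ forall i j, OE (g i j).

Definition SL2O_invariant (C : fieldType) (c0 : Ebar * Ebar)
    (phi : (E * E) * (E * E) -> C) : Prop :=
  forall g, inSL2O g -> forall v, Qtilde c0 v -> phi (vact v g) = phi v.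

Definition is_delta_O (C : fieldType) (c0 : Ebar * Ebar)
    (delta : (E * E) * (E * E) -> C) : Prop :=
  forall v, Qtilde c0 v ->
    (~ QbarO c0 (redV v) -> delta v = 0) /\
    (OK2 v -> QbarO c0 (redV v) -> delta v = 1).

Definition diag_t : 'M[E]_2 :=
  \matrix_(i < 2, j < 2)
    (if i == j then (if (i : nat) == 0%N then t else t^-1) else 0).

Definition in_double_coset (h : 'M[E]_2) : Prop :=
  exists k1 k2, [/\ inSL2O k1, inSL2O k2 & h = k1 *m diag_t *m k2].

Definition same_coset (h1 h2 : 'M[E]_2) : Prop :=
  exists k, inSL2O k /\ h1 = h2 *m k.

Definition coset_reps (L : seq 'M[E]_2) : Prop :=
  [/\ (forall h, h \in L -> in_double_coset h),
      (forall h, in_double_coset h -> exists2 h', h' \in L & same_coset h h') &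
      (forall i j, (i < size L)%N -> (j < size L)%N ->
         same_coset (nth 0 L i) (nth 0 L j) -> i = j)].

Definition hecke (C : fieldType) (L : seq 'M[E]_2)
    (phi : (E * E) * (E * E) -> C) : (E * E) * (E * E) -> C :=
  fun v => \sum_(h <- L) phi (vact v h).

End Quadratic.
End Setting.

(* Main.v *)
Require Import Defs.
From HB Require Import structures.
From mathcomp Require Import all_boot all_algebra ring zify.
From mathcomp Require Import reals.
From mathcomp.real_closed Require Import complex.
From Stdlib Require Import ClassicalEpsilon.
Set Implicit Arguments. Unset Strict Implicit. Unset Printing Implicit Defensive.
Import GRing.Theory.
Local Open Scope ring_scope.


Ltac pring := match goal with
 | |- (_, _) = (_, _) => congr (_, _); pring
 | _ => ring end.

Ltac qunf := rewrite /qpair /qdet /qiota /qsub /qadd /qopp /qmul /qemb /qtr /qscal /=.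

Definition m22 (R : nzRingType) (p q r s : R) : 'M[R]_2 :=
  \matrix_(i < 2, j < 2) if (i : nat) == 0%N then (if (j : nat) == 0%N then p else q) else (if (j : nat) == 0%N then r else s).
Lemma det_m22 (R : comNzRingType) (p q r s : R) : \det (m22 p q r s) = p * s - q * r.
Proof.
rewrite (expand_det_row _ 0) !big_ord_recl big_ord0 /cofactor !det_mx11 !mxE /=.
by rewrite /bump /= expr0 expr1; ring.
Qed.
Lemma m22_eta (R : nzRingType) (A : 'M[R]_2) : A = m22 (A 0 0) (A 0 1) (A 1 0) (A 1 1).
Proof.
apply/matrixP => i j; rewrite !mxE.
by case: i => [[|[|i]] hi] //; case: j => [[|[|j]] hj] //=; congr (A _ _); apply: val_inj.
Qed.
Lemma m22E (R : nzRingType) (p q r s : R) :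
  [/\ m22 p q r s 0 0 = p, m22 p q r s 0 1 = q, m22 p q r s 1 0 = r & m22 p q r s 1 1 = s].
Proof. by rewrite !mxE. Qed.
Lemma mul_m22 (R : comNzRingType) (p q r s p' q' r' s' : R) :
  m22 p q r s *m m22 p' q' r' s' = m22 (p * p' + q * r') (p * q' + q * s') (r * p' + s * r') (r * q' + s * s').
Proof.
apply/matrixP => i j; rewrite !mxE !big_ord_recl big_ord0 !mxE /=.
by case: i => [[|[|i]] hi] //; case: j => [[|[|j]] hj] //=; rewrite addr0.
Qed.
Lemma m22_1 (R : nzRingType) : (1%:M : 'M[R]_2) = m22 1 0 0 1.
Proof.
apply/matrixP => i j; rewrite !mxE.
by case: i => [[|[|i]] hi] //; case: j => [[|[|j]] hj] //=.
Qed.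
Lemma m22_eq (R : nzRingType) (p q r s p' q' r' s' : R) :
  p = p' -> q = q' -> r = r' -> s = s' -> m22 p q r s = m22 p' q' r' s'.
Proof. by move=> -> -> -> ->. Qed.

Definition va (R : comNzRingType) (v : (R * R) * (R * R)) (p q r s : R) :=
  (qadd (qscal p v.1) (qscal r v.2), qadd (qscal q v.1) (qscal s v.2)).

Lemma vact_m22 (R : comUnitRingType) (v : (R * R) * (R * R)) (p q r s : R) :
  vact v (m22 p q r s) = va v p q r s.
Proof. by rewrite /vact /va !mxE. Qed.

Lemma vact_eta (R : comUnitRingType) (v : (R * R) * (R * R)) (g : 'M[R]_2) :
  vact v g = va v (g 0 0) (g 0 1) (g 1 0) (g 1 1).
Proof. by rewrite {1}(m22_eta g) vact_m22. Qed.

Lemma qdet_va (R : comNzRingType) (a b : R) v p q r s :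
  qdet a b (va v p q r s) = qscal (p * s - q * r) (qdet a b v).
Proof.
case: v => [[x1 x2] [x3 x4]]; rewrite /va; qunf; pring.
Qed.

Lemma va_va (R : comNzRingType) (v : (R * R) * (R * R)) p q r s p' q' r' s' :
  va (va v p q r s) p' q' r' s' = va v (p * p' + q * r') (p * q' + q * s') (r * p' + s * r') (r * q' + s * s').
Proof. case: v => [[x1 x2] [x3 x4]]; rewrite /va; qunf; pring. Qed.

Lemma va_inv (R : comNzRingType) (v : (R * R) * (R * R)) p q r s :
  va (va v p q r s) s (- q) (- r) p = ((qscal (p * s - q * r) v.1), (qscal (p * s - q * r) v.2)).
Proof. case: v => [[x1 x2] [x3 x4]]; rewrite /va; qunf; pring. Qed.

Lemma vact_mul (R : comUnitRingType) (v : (R * R) * (R * R)) (A B : 'M[R]_2) :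
  vact (vact v A) B = vact v (A *m B).
Proof.
rewrite (m22_eta A) (m22_eta B) mul_m22 !vact_m22 va_va //.
Qed.

Definition adj2 (R : nzRingType) (A : 'M[R]_2) := m22 (A 1 1) (- A 0 1) (- A 1 0) (A 0 0).

Lemma adj2_r (R : comNzRingType) (A : 'M[R]_2) : \det A = 1 -> A *m adj2 A = 1%:M.
Proof.
move=> h; have e := m22_eta A; rewrite e det_m22 in h.
rewrite /adj2 {1}e mul_m22 m22_1.
by apply: m22_eq; rewrite -?h; ring.
Qed.
Lemma adj2_l (R : comNzRingType) (A : 'M[R]_2) : \det A = 1 -> adj2 A *m A = 1%:M.
Proof.
move=> h; have e := m22_eta A; rewrite e det_m22 in h.
rewrite /adj2 [X in _ *m X]e mul_m22 m22_1.
by apply: m22_eq; rewrite -?h; ring.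
Qed.
Lemma det_adj2 (R : comNzRingType) (A : 'M[R]_2) : \det (adj2 A) = \det A.
Proof. by rewrite /adj2 det_m22 [in RHS](m22_eta A) det_m22; ring. Qed.

Definition pb (P : Prop) : bool := if excluded_middle_informative P then true else false.
Lemma pbP P : reflect P (pb P).
Proof. by rewrite /pb; case: excluded_middle_informative => h; constructor. Qed.

Section Base.
Variables (E : comUnitRingType) (Ebar : fieldType) (red : {rmorphism E -> Ebar}).
Variables (OE : pred E) (N t : E).
Hypothesis Hset : setting_axioms red OE N t.

Let Ob x := OEbar red OE x.

Lemma sub_ax : is_subring OE. Proof. by case: Hset => [[]]. Qed.
Lemma OE0 : OE 0. Proof. by have [] := sub_ax. Qed.
Lemma OE1 : OE 1. Proof. by have [] := sub_ax. Qed.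
Lemma OED x y : OE x -> OE y -> OE (x + y). Proof. by have [_ _ h _ _] := sub_ax; apply: h. Qed.
Lemma OEN x : OE x -> OE (- x). Proof. by have [_ _ _ h _] := sub_ax; apply: h. Qed.
Lemma OEM x y : OE x -> OE y -> OE (x * y). Proof. by have [_ _ _ _ h] := sub_ax; apply: h. Qed.
Lemma OEB x y : OE x -> OE y -> OE (x - y). Proof. by move=> hx hy; apply: OED => //; apply: OEN. Qed.
Lemma OEn n : OE n%:R.
Proof. elim: n => [|n IH]; first exact: OE0. by rewrite -addn1 natrD; apply: OED => //; apply: OE1. Qed.
Lemma OEX x n : OE x -> OE (x ^+ n).
Proof. move=> hx; elim: n => [|n IH]; first by rewrite expr0 OE1. by rewrite exprS; apply: OEM. Qed.
Lemma OE_N : OE N. Proof. by case: Hset => [[]]. Qed.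
Lemma OE_t : OE t. Proof. by case: Hset => [[]]. Qed.
Lemma NN : N * N = 0. Proof. by case: Hset => _ [] h _ _ _ _. Qed.
Lemma kerOE x : OE x -> (red x = 0 <-> exists y, OE y /\ x = N * y).
Proof. by case: Hset => _ [] _ h _ _ _; apply: h. Qed.
Lemma annN x : OE x -> (x * N = 0 <-> red x = 0).
Proof. by case: Hset => _ _ h _ _; apply: h. Qed.
Lemma loc1 s : nzd OE s -> s \is a GRing.unit. Proof. by case: Hset => _ _ _ [h _] _; apply: h. Qed.
Lemma loc2 e : exists x s, [/\ OE x, nzd OE s & e = x / s]. Proof. by case: Hset => _ _ _ [_ h] _; apply: h. Qed.
Lemma lfa : local_field_axioms red OE t. Proof. by case: Hset. Qed.

Lemma redN : red N = 0.
Proof. apply/(kerOE OE_N); exists 1; split; [exact: OE1| by rewrite mulr1]. Qed.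

Lemma Nneq0 : N != 0.
Proof.
apply/eqP => h. have := annN OE1; rewrite h mulr0 rmorph1 => -[H _].
by have := H erefl; apply/eqP; exact: oner_neq0.
Qed.

Lemma Ob_red x : OE x -> Ob (red x). Proof. by move=> h; exists x. Qed.
Lemma Ob0 : Ob 0. Proof. by exists 0; rewrite rmorph0; split => //; exact: OE0. Qed.
Lemma Ob1 : Ob 1. Proof. by exists 1; rewrite rmorph1; split => //; exact: OE1. Qed.
Lemma ObD x y : Ob x -> Ob y -> Ob (x + y).
Proof. by move=> [x' [hx <-]] [y' [hy <-]]; exists (x' + y'); rewrite rmorphD; split => //; apply: OED. Qed.
Lemma ObN x : Ob x -> Ob (- x).
Proof. by move=> [x' [hx <-]]; exists (- x'); rewrite rmorphN; split => //; apply: OEN. Qed.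
Lemma ObM x y : Ob x -> Ob y -> Ob (x * y).
Proof. by move=> [x' [hx <-]] [y' [hy <-]]; exists (x' * y'); rewrite rmorphM; split => //; apply: OEM. Qed.
Lemma ObB x y : Ob x -> Ob y -> Ob (x - y).
Proof. by move=> hx hy; apply: ObD => //; apply: ObN. Qed.
Lemma ObX x n : Ob x -> Ob (x ^+ n).
Proof. move=> hx; elim: n => [|n IH]; first by rewrite expr0; exact: Ob1. by rewrite exprS; apply: ObM. Qed.
Lemma Obn n : Ob n%:R. Proof. by exists n%:R; rewrite rmorph_nat; split => //; exact: OEn. Qed.

Lemma nzd_of s : OE s -> red s != 0 -> nzd OE s.
Proof.
move=> hs rs; split => // y hy sy0.
have ry : red y = 0.
  by have := congr1 red sy0; rewrite rmorphM rmorph0 => /eqP; rewrite mulf_eq0 (negbTE rs) /= => /eqP.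
have [z [hz yE]] := (proj1 (kerOE hy)) ry.
rewrite yE in sy0 *.
have : (s * z) * N = 0 by rewrite -mulrA (mulrC z) sy0.
move/(annN (OEM hs hz)); rewrite rmorphM => /eqP; rewrite mulf_eq0 (negbTE rs) /= => /eqP rz.
have [w [hw ->]] := (proj1 (kerOE hz)) rz.
by rewrite mulrA NN mul0r.
Qed.

Lemma unit_of s : OE s -> red s != 0 -> s \is a GRing.unit.
Proof. by move=> h1 h2; apply: loc1; apply: nzd_of. Qed.

Lemma red_nzd s : nzd OE s -> red s != 0.
Proof.
move=> [hs H]; apply/eqP => rs.
have := (proj2 (annN hs)) rs => /(H _ OE_N) => h.
by move: Nneq0; rewrite h eqxx.
Qed.

Lemma kerE e : red e = 0 -> exists e', e = N * e'.
Proof.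
have [x [s [hx hs ->]]] := loc2 e.
have us := loc1 hs; have rs := red_nzd hs.
rewrite rmorphM rmorphV // => /eqP; rewrite mulf_eq0 invr_eq0 (negbTE rs) orbF => /eqP rx.
have [y [hy ->]] := (proj1 (kerOE hx)) rx.
by exists (y / s); rewrite mulrA.
Qed.

Lemma Nred e e' : red e = red e' -> N * e = N * e'.
Proof.
move=> h; have : red (e - e') = 0 by rewrite rmorphB h subrr.
move/kerE => [z hz]; apply/eqP; rewrite -subr_eq0 -mulrBr hz mulrA NN mul0r //.
Qed.

Lemma lift x : Ob x -> exists y, OE y /\ red y = x. Proof. by []. Qed.

Lemma NOE e : Ob (red e) -> OE (N * e).
Proof. move=> [y [hy hr]]; rewrite -(Nred hr); exact: OEM OE_N hy. Qed.

Lemma invOE s : OE s -> red s != 0 -> Ob (red s)^-1 -> OE s^-1.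
Proof.
move=> hs rs [y [hy ry]].
have us := unit_of hs rs.
have h1 : red (s * y - 1) = 0 by rewrite rmorphB rmorphM ry rmorph1 divff // subrr.
have [z [hz hz']] := (proj1 (kerOE (OEB (OEM hs hy) OE1))) h1.
have e : s * (y * (1 - N * z)) = 1.
  have -> : s * (y * (1 - N * z)) = (s * y) * (1 - N * z) by rewrite mulrA.
  have -> : s * y = 1 + N * z by rewrite -hz' addrC subrK.
  have NzNz : N * z * (N * z) = 0 by rewrite mulrACA NN mul0r.
  have -> : (1 + N * z) * (1 - N * z) = 1 - N * z * (N * z) by ring.
  by rewrite NzNz subr0.
have -> : s^-1 = y * (1 - N * z).
  by apply: (mulrI us); rewrite mulrV // e.
exact: OEM hy (OEB OE1 (OEM OE_N hz)).
Qed.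

Lemma pi_neq0 : red t != 0.
Proof.
case: lfa => _ h _ _ _; apply/eqP => e; apply: h; rewrite e invr0; exact: Ob0.
Qed.
Lemma t_unit : t \is a GRing.unit. Proof. exact: unit_of OE_t pi_neq0. Qed.
Lemma two_neq0 : (2%:R : Ebar) != 0. Proof. by case: lfa => _ _ _ _ []. Qed.
Lemma two_unit : (2%:R : E) \is a GRing.unit.
Proof. apply: unit_of; first exact: OEn. by rewrite rmorph_nat two_neq0. Qed.
Lemma inv2OE : OE (2%:R : E)^-1.
Proof. apply: invOE; first exact: OEn. by rewrite rmorph_nat two_neq0. rewrite rmorph_nat. by case: lfa => _ _ _ _ []. Qed.


Local Notation pi := (red t).

Lemma val_ax x : x != 0 -> exists (u : Ebar) (n : int), [/\ Ob u, Ob u^-1 & x = u * pi ^ n].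
Proof. by case: lfa => h _ _ _ _; apply: h. Qed.
Lemma pinv_notO : ~ Ob pi^-1. Proof. by case: lfa. Qed.

Lemma L0 x : exists m : nat, Ob (pi ^+ m * x).
Proof.
have [->|nx] := eqVneq x 0; first by exists 0%N; rewrite mulr0; exact: Ob0.
have [u [n [hu hu' ->]]] := val_ax nx.
case: n => k.
  by exists 0%N; rewrite -exprnP expr0 mul1r; apply: ObM => //; apply: ObX; exists t; split => //; exact: OE_t.
exists k.+1; rewrite NegzE -exprnN mulrCA mulrV ?mulr1 //.
by rewrite unitfE expf_neq0 // pi_neq0.
Qed.

Definition inpi (r : Ebar) := exists y, Ob y /\ r = pi * y.

Lemma Obpi : Ob pi. Proof. exists t; split => //; exact: OE_t. Qed.

Lemma Ucase r : Ob r -> inpi r \/ (r != 0 /\ Ob r^-1).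
Proof.
move=> hr.
have [->|nr] := eqVneq r 0; first by left; exists 0; rewrite mulr0; split => //; exact: Ob0.
have [u [n [hu hu' re]]] := val_ax nr.
have un : u != 0 by apply: contraNneq nr => u0; rewrite re u0 mul0r.
case: n re => [[|k]|k] re; rewrite ?NegzE -?exprnN -?exprnP in re.
- right; split => //; rewrite re expr0 mulr1; exact: hu'.
- left; exists (u * pi ^+ k); split; first by apply: ObM => //; apply: ObX; exact: Obpi.
  by rewrite re exprS mulrCA.
- exfalso; apply: pinv_notO.
  have -> : pi^-1 = r * u^-1 * pi ^+ k.
    rewrite re exprS; field.
    by rewrite un expf_neq0 ?pi_neq0 // pi_neq0.
  by apply: ObM; [apply: ObM|apply: ObX; exact: Obpi].
Qed.

Lemma unit_notpi w : w != 0 -> Ob w^-1 -> ~ inpi w.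
Proof.
move=> nw hw [y [hy e]]; apply: pinv_notO.
have ny : y != 0 by move: nw; rewrite e mulf_eq0 negb_or => /andP[].
have -> : pi^-1 = y * w^-1 by rewrite e; field; rewrite pi_neq0 ny.
exact: ObM.
Qed.

Lemma unitM x y : x != 0 -> Ob x^-1 -> y != 0 -> Ob y^-1 -> x * y != 0 /\ Ob (x * y)^-1.
Proof. by move=> ? ? ? ?; rewrite invfM mulf_neq0 //; split => //; apply: ObM. Qed.

Variables (a b : E).
Hypothesis Hunr : unramified_quadratic red OE t a b.

Definition nmb (x y : Ebar) := x ^+ 2 + red a * x * y - red b * y ^+ 2.

Lemma Oba : Ob (red a). Proof. by case: Hunr => h _ _; exists a. Qed.
Lemma Obb : Ob (red b). Proof. by case: Hunr => _ h _; exists b. Qed.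

Lemma nmb_unit x y : Ob x -> Ob y -> ~ (inpi x /\ inpi y) ->
  nmb x y != 0 /\ Ob (nmb x y)^-1.
Proof.
move=> hx hy nb.
case: (Ucase hy) => [[z [hz ye]]|[ny hy']].
  case: (Ucase hx) => [hxp|[nx hx']]; first by exfalso; apply: nb; split => //; exists z.
  have hn : Ob (nmb x y) by rewrite /nmb; apply: ObB; [apply: ObD; [apply: ObX|apply: ObM; [apply: ObM => //; exact: Oba|]]|apply: ObM; [exact: Obb|apply: ObX]].
  case: (Ucase hn) => // -[w [hw e]]; exfalso.
  have [nx2 hx2'] := unitM nx hx' nx hx'.
  apply: (unit_notpi nx2 hx2'); exists (w - (red a * x * z - red b * pi * z ^+ 2)); split.
    apply: ObB => //; apply: ObB; first by apply: ObM => //; apply: ObM => //; exact: Oba.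
    by apply: ObM; [apply: ObM; [exact: Obb|exact: Obpi]|apply: ObX].
  move: e; rewrite /nmb ye => e; rewrite mulrBr -e; ring.
set X := - x * y^-1.
have hX : Ob X by apply: ObM => //; apply: ObN.
have hP : Ob (X ^+ 2 - red a * X - red b).
  by apply: ObB; [apply: ObB; [apply: ObX|apply: ObM => //; exact: Oba]|exact: Obb].
case: (Ucase hP) => [hp|[nP hP']]; first by exfalso; case: Hunr => _ _ H; apply: (H X hX); exact: hp.
have e : nmb x y = y ^+ 2 * (X ^+ 2 - red a * X - red b).
  by rewrite /X /nmb; field.
have [ny2 hy2'] := unitM ny hy' ny hy'.
by rewrite e; rewrite -expr2 in ny2 hy2'; apply: unitM.
Qed.

Lemma norm_int x y : Ob (nmb x y) -> Ob x /\ Ob y.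
Proof.
move=> hn.
have [mx hmx] := L0 x; have [my hmy] := L0 y.
pose P m := pb (Ob (pi ^+ m * x) /\ Ob (pi ^+ m * y)).
have ex : exists m, P m.
  exists (mx + my)%N; apply/pbP; split.
    have -> : pi ^+ (mx + my) * x = pi ^+ my * (pi ^+ mx * x) by rewrite exprD; ring.
    by apply: ObM => //; apply: ObX; exact: Obpi.
  have -> : pi ^+ (mx + my) * y = pi ^+ mx * (pi ^+ my * y) by rewrite exprD; ring.
  by apply: ObM => //; apply: ObX; exact: Obpi.
case: (ex_minnP ex) => -[|m] /pbP [h1 h2] hmin; first by rewrite !expr0 !mul1r in h1 h2.
exfalso.
have nb : ~ (inpi (pi ^+ m.+1 * x) /\ inpi (pi ^+ m.+1 * y)).
  move=> [[zx [hzx ex']] [zy [hzy ey']]].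
  have : (m.+1 <= m)%N.
    apply: hmin; apply/pbP; split.
      by have -> : pi ^+ m * x = zx by apply: (mulfI pi_neq0); rewrite -ex' exprS mulrA.
    by have -> : pi ^+ m * y = zy by apply: (mulfI pi_neq0); rewrite -ey' exprS mulrA.
  by rewrite ltnn.
have [nz hz] := nmb_unit h1 h2 nb.
apply: (unit_notpi nz hz); exists (pi ^+ m * pi ^+ m.+1 * nmb x y); split.
  by apply: ObM => //; apply: ObM; apply: ObX; exact: Obpi.
by rewrite /nmb !exprS; ring.
Qed.

Lemma bdd e : exists m, OE (t ^+ m * e).
Proof.
have [m1 h1] := L0 (red e).
have [y [hy ry]] := h1.
have r0 : red (t ^+ m1 * e - y) = 0 by rewrite rmorphB rmorphM rmorphXn ry subrr.
have [e' he'] := kerE r0.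
have [m2 h2] := L0 (red e').
exists (m2 + m1)%N.
have -> : t ^+ (m2 + m1) * e = t ^+ m2 * y + N * (t ^+ m2 * e').
  rewrite exprD -mulrA (_ : t ^+ m1 * e = y + N * e'); last by rewrite -he' addrC subrK.
  ring.
apply: OED; first by apply: OEM => //; apply: OEX; exact: OE_t.
by apply: NOE; rewrite rmorphM rmorphXn.
Qed.

Definition lf (x : Ebar) : E := epsilon (inhabits 0) (fun y => OE y /\ red y = x).
Lemma lfP x : Ob x -> OE (lf x) /\ red (lf x) = x.
Proof. by move=> h; rewrite /lf; apply: (epsilon_spec (inhabits 0) (fun y => OE y /\ red y = x)). Qed.

Local Notation B := (Bform a b).

Lemma BDl v v' w : B (vadd v v') w = B v w + B v' w.
Proof. case: v => [[? ?] [? ?]]; case: v' => [[? ?] [? ?]]; case: w => [[? ?] [? ?]]; rewrite /Bform /vadd; qunf; ring. Qed.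
Lemma BDr v w w' : B v (vadd w w') = B v w + B v w'.
Proof. case: v => [[? ?] [? ?]]; case: w' => [[? ?] [? ?]]; case: w => [[? ?] [? ?]]; rewrite /Bform /vadd; qunf; ring. Qed.
Lemma BBl v v' w : B (vsub v v') w = B v w - B v' w.
Proof. case: v => [[? ?] [? ?]]; case: v' => [[? ?] [? ?]]; case: w => [[? ?] [? ?]]; rewrite /Bform /vsub; qunf; ring. Qed.
Lemma BBr v w w' : B v (vsub w w') = B v w - B v w'.
Proof. case: v => [[? ?] [? ?]]; case: w' => [[? ?] [? ?]]; case: w => [[? ?] [? ?]]; rewrite /Bform /vsub; qunf; ring. Qed.
Lemma BZl e v w : B (vscal e v) w = e * B v w.
Proof. case: v => [[? ?] [? ?]]; case: w => [[? ?] [? ?]]; rewrite /Bform /vscal; qunf; ring. Qed.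
Lemma BZr e v w : B v (vscal e w) = e * B v w.
Proof. case: v => [[? ?] [? ?]]; case: w => [[? ?] [? ?]]; rewrite /Bform /vscal; qunf; ring. Qed.
Lemma B_va v w p q r s : B (va v p q r s) (va w p q r s) = (p * s - q * r) * B v w.
Proof. case: v => [[? ?] [? ?]]; case: w => [[? ?] [? ?]]; rewrite /Bform /va; qunf; ring. Qed.
Lemma B_vact v w g : B (vact v g) (vact w g) = \det g * B v w.
Proof. by rewrite !vact_eta B_va [in RHS](m22_eta g) det_m22. Qed.
Lemma BNN v w : B (vscal N v) (vscal N w) = 0.
Proof. by rewrite BZl BZr mulrA NN mul0r. Qed.

Lemma OEa : OE a. Proof. by case: Hunr. Qed.
Lemma OEb : OE b. Proof. by case: Hunr. Qed.

Lemma OK_add z w : OK OE z -> OK OE w -> OK OE (qadd z w).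
Proof. by case: z => ? ?; case: w => ? ? [? ?] [? ?]; split; apply: OED. Qed.
Lemma OK_opp z : OK OE z -> OK OE (qopp z).
Proof. by case: z => ? ? [? ?]; split; apply: OEN. Qed.
Lemma OK_sub z w : OK OE z -> OK OE w -> OK OE (qsub z w).
Proof. by move=> ? ?; apply: OK_add => //; apply: OK_opp. Qed.
Lemma OK_scal e z : OE e -> OK OE z -> OK OE (qscal e z).
Proof. by case: z => ? ? ? [? ?]; split; apply: OEM. Qed.
Lemma OK_mul z w : OK OE z -> OK OE w -> OK OE (qmul a b z w).
Proof.
case: z => ? ?; case: w => ? ? [? ?] [? ?]; split => /=.
  by apply: OED; [apply: OEM|apply: OEM; [apply: OEM => //; exact: OEb|]].
by apply: OED; [apply: OED; apply: OEM|apply: OEM; [apply: OEM => //; exact: OEa|]].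
Qed.
Lemma OE_tr z : OK OE z -> OE (qtr a z).
Proof. by case: z => ? ? [? ?]; apply: OED; apply: OEM => //; [exact: OEn|exact: OEa]. Qed.
Lemma OK_emb e : OE e -> OK OE (qemb e).
Proof. by move=> ?; split => //; exact: OE0. Qed.
Lemma OK_iota z : OK OE z -> OK OE (qiota a z).
Proof. by move=> h; apply: OK_sub => //; apply: OK_emb; apply: OE_tr. Qed.
Lemma OE_pair z w : OK OE z -> OK OE w -> OE (qpair a b z w).
Proof. by move=> ? ?; apply: OE_tr; apply: OK_mul => //; apply: OK_iota. Qed.
Lemma OE_B v w : OK2 OE v -> OK2 OE w -> OE (B v w).
Proof.
case: v => v1 v2; case: w => w1 w2 [? ?] [? ?] /=.
by apply: OEM; [exact: inv2OE|apply: OEB; apply: OE_pair].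
Qed.
Lemma OK2_vadd v w : OK2 OE v -> OK2 OE w -> OK2 OE (vadd v w).
Proof. by case: v => ? ?; case: w => ? ? [? ?] [? ?]; split; apply: OK_add. Qed.
Lemma OK2_vsub v w : OK2 OE v -> OK2 OE w -> OK2 OE (vsub v w).
Proof. by case: v => ? ?; case: w => ? ? [? ?] [? ?]; split; apply: OK_sub. Qed.
Lemma OK2_vscal e v : OE e -> OK2 OE v -> OK2 OE (vscal e v).
Proof. by case: v => ? ? ? [? ?]; split; apply: OK_scal. Qed.
Lemma OK2_va v p q r s : OE p -> OE q -> OE r -> OE s -> OK2 OE v -> OK2 OE (va v p q r s).
Proof. by case: v => ? ? ? ? ? ? [? ?]; split; apply: OK_add; apply: OK_scal. Qed.

Lemma Ok_add z w : OKbar red OE z -> OKbar red OE w -> OKbar red OE (qadd z w).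
Proof. by case: z => ? ?; case: w => ? ? [? ?] [? ?]; split; apply: ObD. Qed.
Lemma Ok_opp z : OKbar red OE z -> OKbar red OE (qopp z).
Proof. by case: z => ? ? [? ?]; split; apply: ObN. Qed.
Lemma Ok_sub z w : OKbar red OE z -> OKbar red OE w -> OKbar red OE (qsub z w).
Proof. by move=> ? ?; apply: Ok_add => //; apply: Ok_opp. Qed.
Lemma Ok_scal e z : Ob e -> OKbar red OE z -> OKbar red OE (qscal e z).
Proof. by case: z => ? ? ? [? ?]; split; apply: ObM. Qed.
Lemma Ok_mul z w : OKbar red OE z -> OKbar red OE w -> OKbar red OE (qmul (red a) (red b) z w).
Proof.
case: z => ? ?; case: w => ? ? [? ?] [? ?]; split => /=.
  by apply: ObD; [apply: ObM|apply: ObM; [apply: ObM => //; exact: Obb|]].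
by apply: ObD; [apply: ObD; apply: ObM|apply: ObM; [apply: ObM => //; exact: Oba|]].
Qed.
Lemma Ob_tr z : OKbar red OE z -> Ob (qtr (red a) z).
Proof. by case: z => ? ? [? ?]; apply: ObD; apply: ObM => //; [exact: Obn|exact: Oba]. Qed.
Lemma Ok_iota z : OKbar red OE z -> OKbar red OE (qiota (red a) z).
Proof. by move=> h; apply: Ok_sub => //; split; [apply: Ob_tr|exact: Ob0]. Qed.
Lemma Ok_det v : OKbar2 red OE v -> OKbar red OE (qdet (red a) (red b) v).
Proof. by case: v => ? ? [? ?]; apply: Ok_sub; apply: Ok_mul => //; apply: Ok_iota. Qed.
Lemma Ok2_va v p q r s : Ob p -> Ob q -> Ob r -> Ob s -> OKbar2 red OE v -> OKbar2 red OE (va v p q r s).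
Proof. by case: v => ? ? ? ? ? ? [? ?]; split; apply: Ok_add; apply: Ok_scal. Qed.

Lemma redV_va v p q r s : redV red (va v p q r s) = va (redV red v) (red p) (red q) (red r) (red s).
Proof. by case: v => [[? ?] [? ?]]; rewrite /va /redV /redK; qunf; rewrite !rmorphD !rmorphM. Qed.
Lemma redV_vadd v w : redV red (vadd v w) =
  (qadd (redK red v.1) (redK red w.1), qadd (redK red v.2) (redK red w.2)).
Proof. by case: v => [[? ?] [? ?]]; case: w => [[? ?] [? ?]]; rewrite /vadd /redV /redK; qunf; rewrite !rmorphD. Qed.
Lemma redV_vsub v w : redV red (vsub v w) =
  (qsub (redK red v.1) (redK red w.1), qsub (redK red v.2) (redK red w.2)).
Proof. by case: v => [[? ?] [? ?]]; case: w => [[? ?] [? ?]]; rewrite /vsub /redV /redK; qunf; rewrite !rmorphB. Qed.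
Lemma redV_NK v : redV red (vscal N v) = ((0, 0), (0, 0)).
Proof. by case: v => [[? ?] [? ?]]; rewrite /vscal /redV /redK; qunf; rewrite !rmorphM redN !mul0r. Qed.

Lemma NK2_ex n : NK2 N n -> exists w, n = vscal N w.
Proof.
case: n => [[n1 n2] [n3 n4]] [[[e1 h1] [e2 h2]] [[e3 h3] [e4 h4]]]; simpl in *.
by exists ((e1, e2), (e3, e4)); rewrite /vscal /qscal /= h1 h2 h3 h4.
Qed.
Lemma NK2_vscal w : NK2 N (vscal N w).
Proof. by case: w => [[? ?] [? ?]]; split; split; eexists. Qed.

Lemma same_red v w : redV red v = redV red w -> exists n, vsub v w = vscal N n.
Proof.
case: v => [[v1 v2] [v3 v4]]; case: w => [[w1 w2] [w3 w4]]; rewrite /redV /redK /= => [[e1 e2 e3 e4]].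
have k x y : red x = red y -> exists z, x - y = N * z.
  by move=> h; apply: kerE; rewrite rmorphB h subrr.
have [z1 h1] := k _ _ e1; have [z2 h2] := k _ _ e2; have [z3 h3] := k _ _ e3; have [z4 h4] := k _ _ e4.
by exists ((z1, z2), (z3, z4)); rewrite /vsub /vscal; qunf; rewrite h1 h2 h3 h4.
Qed.

Lemma same_red_OK v w : OK2 OE v -> OK2 OE w -> redV red v = redV red w ->
  exists n, OK2 OE n /\ vsub v w = vscal N n.
Proof.
case: v => [[v1 v2] [v3 v4]]; case: w => [[w1 w2] [w3 w4]]; rewrite /redV /redK /OK2 /OK /=.
move=> [[o1 o2] [o3 o4]] [[p1 p2] [p3 p4]] [e1 e2 e3 e4].
have k x y : OE x -> OE y -> red x = red y -> exists z, OE z /\ x - y = N * z.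
  by move=> hx hy h; apply/(kerOE (OEB hx hy)); rewrite rmorphB h subrr.
have [z1 [q1 h1]] := k _ _ o1 p1 e1; have [z2 [q2 h2]] := k _ _ o2 p2 e2.
have [z3 [q3 h3]] := k _ _ o3 p3 e3; have [z4 [q4 h4]] := k _ _ o4 p4 e4.
by exists ((z1, z2), (z3, z4)); split; [do !split|rewrite /vsub /vscal; qunf; rewrite h1 h2 h3 h4].
Qed.

Variables (C : fieldType) (psi : E -> C).
Hypothesis Hpsi : good_character OE N t psi.
Variable c0 : Ebar * Ebar.
Hypothesis Htr : qtr (red a) c0 = 0.
Hypothesis Hval : OKbar red OE c0 /\
          exists d, OKbar red OE d /\ qmul (red a) (red b) c0 d = (1, 0).

Lemma psiD x y : psi (x + y) = psi x * psi y. Proof. by case: Hpsi. Qed.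
Lemma psi_neq0 x : psi x != 0. Proof. by case: Hpsi. Qed.
Lemma psiO x : OE x -> psi x = 1. Proof. by case: Hpsi => _ _ h _; apply: h. Qed.
Lemma psi0 : psi 0 = 1. Proof. exact: psiO OE0. Qed.

Definition IR v := OKbar2 red OE (redV red v).
Definition QT v := Qtilde red a b c0 v.
Definition lft v := epsilon (inhabits v) (fun l => OK2 OE l /\ redV red l = redV red v).
Definition dlt v : C := if pb (IR v) then psi (B (lft v) (vsub v (lft v))) else 0.

Lemma lftP v : IR v -> OK2 OE (lft v) /\ redV red (lft v) = redV red v.
Proof.
move=> h; rewrite /lft; apply: (epsilon_spec (inhabits v) (fun l => OK2 OE l /\ redV red l = redV red v)).
case: v h => [[v1 v2] [v3 v4]]; rewrite /IR /redV /redK /OKbar2 /OKbar /= => [[[h1 h2] [h3 h4]]].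
have [o1 r1] := lfP h1; have [o2 r2] := lfP h2; have [o3 r3] := lfP h3; have [o4 r4] := lfP h4.
by exists ((lf (red v1), lf (red v2)), (lf (red v3), lf (red v4))); rewrite /OK2 /OK /= r1 r2 r3 r4.
Qed.

Lemma vid1 (v l1 l2 : (E * E) * (E * E)) : vsub v l1 = vadd (vsub v l2) (vsub l2 l1).
Proof. case: v => [[? ?] [? ?]]; case: l1 => [[? ?] [? ?]]; case: l2 => [[? ?] [? ?]]; rewrite /vadd /vsub; qunf; pring. Qed.
Lemma vid2 (l1 l2 : (E * E) * (E * E)) : l1 = vsub l2 (vsub l2 l1).
Proof. case: l1 => [[? ?] [? ?]]; case: l2 => [[? ?] [? ?]]; rewrite /vsub; qunf; pring. Qed.

Lemma key l1 l2 v : OK2 OE l1 -> OK2 OE l2 -> redV red l1 = redV red v -> redV red l2 = redV red v ->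
  psi (B l1 (vsub v l1)) = psi (B l2 (vsub v l2)).
Proof.
move=> o1 o2 r1 r2.
have [w hw] := same_red (esym r2).
have [y [oy hy]] := same_red_OK o2 o1 (etrans r2 (esym r1)).
have e1 : vsub v l1 = vadd (vscal N w) (vscal N y) by rewrite -hw -hy (vid1 v l1 l2).
have e2 : l1 = vsub l2 (vscal N y) by rewrite -hy -(vid2 l1 l2).
rewrite e1 {1}e2 BDr !BBl BNN BNN !subr0 psiD [psi (B l2 (vscal N y))]psiO ?mulr1; last first.
  by rewrite BZr; apply: OEM; [exact: OE_N|exact: OE_B].
by rewrite hw.
Qed.

Lemma dlt_IR v : IR v -> dlt v = psi (B (lft v) (vsub v (lft v))).
Proof. by rewrite /dlt; case: pbP. Qed.
Lemma dlt_nIR v : ~ IR v -> dlt v = 0.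
Proof. by rewrite /dlt; case: pbP. Qed.
Lemma dlt_any v l : IR v -> OK2 OE l -> redV red l = redV red v -> dlt v = psi (B l (vsub v l)).
Proof. move=> h ol rl; have [o r] := lftP h; rewrite dlt_IR //; exact: key. Qed.

Lemma IR_add v d : OK2 OE d -> IR v -> IR (vadd v d).
Proof.
case: v => [v1 v2]; case: d => [[d1 d2] [d3 d4]] [[o1 o2] [o3 o4]] [h1 h2]; rewrite /IR redV_vadd /=.
by split; apply: Ok_add => //; split; apply: Ob_red.
Qed.
Lemma IR_sub v d : OK2 OE d -> IR v -> IR (vsub v d).
Proof.
case: v => [v1 v2]; case: d => [[d1 d2] [d3 d4]] [[o1 o2] [o3 o4]] [h1 h2]; rewrite /IR redV_vsub /=.
by split; apply: Ok_sub => //; split; apply: Ob_red.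
Qed.
Lemma vid3 (v w : (E * E) * (E * E)) : w = vadd v (vsub w v).
Proof. case: v => [[? ?] [? ?]]; case: w => [[? ?] [? ?]]; rewrite /vadd /vsub; qunf; pring. Qed.
Lemma vid4 (v w : (E * E) * (E * E)) : v = vsub w (vsub w v).
Proof. case: v => [[? ?] [? ?]]; case: w => [[? ?] [? ?]]; rewrite /vadd /vsub; qunf; pring. Qed.
Lemma vid5 (v w l : (E * E) * (E * E)) : vsub w (vadd l (vsub w v)) = vsub v l.
Proof. case: v => [[? ?] [? ?]]; case: w => [[? ?] [? ?]]; case: l => [[? ?] [? ?]]; rewrite /vadd /vsub; qunf; pring. Qed.
Lemma vid6 (v n l : (E * E) * (E * E)) : vsub (vadd v n) l = vadd (vsub v l) n.
Proof. case: v => [[? ?] [? ?]]; case: n => [[? ?] [? ?]]; case: l => [[? ?] [? ?]]; rewrite /vadd /vsub; qunf; pring. Qed.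

Lemma redV_addN v w : redV red (vadd v (vscal N w)) = redV red v.
Proof.
case: v => [[? ?] [? ?]]; case: w => [[? ?] [? ?]]; rewrite /vadd /vscal /redV /redK; qunf.
by rewrite !rmorphD !rmorphM redN !mul0r !addr0.
Qed.

Lemma redV_shift l v w : redV red l = redV red v -> redV red (vadd l (vsub w v)) = redV red w.
Proof.
case: l => [[? ?] [? ?]]; case: v => [[? ?] [? ?]]; case: w => [[? ?] [? ?]].
rewrite /vadd /vsub /redV /redK; qunf; rewrite !rmorphD !rmorphN => -[-> -> -> ->].
by congr ((_, _), (_, _)); ring.
Qed.

Lemma close_ex n w v : close OE t n w v -> exists y, OK2 OE y /\ vsub w v = vscal (t ^+ n) y.
Proof.
rewrite /close; move: (vsub w v) => [[d1 d2] [d3 d4]] /= [[y1 [o1 ->]] [y2 [o2 ->]] [y3 [o3 ->]] [y4 [o4 ->]]].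
by exists ((y1, y2), (y3, y4)).
Qed.

Lemma OEt n : OE (t ^+ n). Proof. exact: OEX OE_t. Qed.

Lemma OE_up m k x : OE (t ^+ m * x) -> (m <= k)%N -> OE (t ^+ k * x).
Proof.
move=> h hk; rewrite -(subnKC hk) exprD.
have -> : t ^+ m * t ^+ (k - m) * x = t ^+ (k - m) * (t ^+ m * x) by ring.
by apply: OEM => //; exact: OEt.
Qed.

Lemma dlt_lc v : QT v -> exists n : nat, forall w, QT w -> close OE t n w v -> dlt w = dlt v.
Proof.
move=> qv.
case: (pbP (IR v)) => iv; last first.
  exists 0%N => w qw /close_ex [y [oy ey]].
  have ow : OK2 OE (vsub w v) by rewrite ey; apply: OK2_vscal => //; exact: OEt.
  rewrite !dlt_nIR // => iw; apply: iv; rewrite (vid4 v w); exact: IR_sub.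
have [ol rl] := lftP iv.
case ee: (vsub v (lft v)) => [[e1 e2] [e3 e4]].
have [m1 h1] := bdd e1; have [m2 h2] := bdd e2; have [m3 h3] := bdd e3; have [m4 h4] := bdd e4.
exists (m1 + m2 + m3 + m4)%N => w qw /close_ex [y [oy ey]].
set n := (m1 + m2 + m3 + m4)%N in ey *.
have ow : OK2 OE (vsub w v) by rewrite ey; apply: OK2_vscal => //; exact: OEt.
have iw : IR w by rewrite (vid3 v w); exact: IR_add.
rewrite (dlt_any iw (l := vadd (lft v) (vsub w v))); last exact: redV_shift.
  rewrite vid5 BDl psiD dlt_IR // [psi (B (vsub w v) _)]psiO ?mulr1 //.
  rewrite ey BZl -BZr; apply: OE_B => //; rewrite ee /vscal /qscal /=.
  do !split => /=; apply: (OE_up (m := _)); [exact: h1| |exact: h2| |exact: h3| |exact: h4|]; rewrite /n; lia.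
exact: OK2_vadd.
Qed.

Lemma dlt_eq v n : NK2 N n -> QT v -> QT (vadd v n) -> dlt (vadd v n) = psi (B v n) * dlt v.
Proof.
move=> /NK2_ex [w ->] qv qvn.
case: (pbP (IR v)) => iv; last first.
  by rewrite !dlt_nIR ?mulr0 // /IR redV_addN.
have [ol rl] := lftP iv.
have ivn : IR (vadd v (vscal N w)) by rewrite /IR redV_addN.
rewrite (dlt_any ivn ol); last by rewrite redV_addN.
rewrite vid6 BDr psiD dlt_IR // mulrC; congr (_ * _); congr psi.
have [w' hw'] := same_red (esym rl).
by rewrite {2}(vid3 (lft v) v) BDl hw' BNN addr0.
Qed.

Lemma vscal1 (v : (E * E) * (E * E)) : vscal 1 v = v.
Proof. by case: v => [[? ?] [? ?]]; rewrite /vscal /qscal /= !mul1r. Qed.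

Lemma dlt_inF : in_F red OE N t a b psi c0 dlt.
Proof.
split.
- exact: dlt_lc.
- by move=> v n hn qv qvn; exact: dlt_eq.
- exists 0%N => v qv; rewrite expr0 vscal1.
  by case: (pbP (IR v)) => iv; [|rewrite dlt_nIR // eqxx].
Qed.

Lemma dlt_delta : is_delta_O red OE a b c0 dlt.
Proof.
move=> v qv; split.
  by move=> h; apply: dlt_nIR => iv; apply: h.
move=> ov [_ iv]; rewrite (dlt_any iv ov) //.
have -> : vsub v v = vscal 0 v by case: v {qv ov iv} => [[? ?] [? ?]]; rewrite /vsub /vscal; qunf; pring.
by rewrite BZr mul0r psi0.
Qed.

Lemma vact1 (v : (E * E) * (E * E)) : vact v 1%:M = v.
Proof. by rewrite m22_1 vact_m22; case: v => [[? ?] [? ?]]; rewrite /va; qunf; pring. Qed.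

Lemma vsub_vact v w (g : 'M[E]_2) : vsub (vact v g) (vact w g) = vact (vsub v w) g.
Proof. rewrite !vact_eta; case: v => [[? ?] [? ?]]; case: w => [[? ?] [? ?]]; rewrite /va /vsub; qunf; pring. Qed.
Lemma vadd_vact v w (g : 'M[E]_2) : vadd (vact v g) (vact w g) = vact (vadd v w) g.
Proof. rewrite !vact_eta; case: v => [[? ?] [? ?]]; case: w => [[? ?] [? ?]]; rewrite /va /vadd; qunf; pring. Qed.

Lemma qscal1 (z : Ebar * Ebar) : qscal 1 z = z.
Proof. by case: z => ? ?; rewrite /qscal /= !mul1r. Qed.

Lemma QT_vact v (g : 'M[E]_2) : QT v -> \det g = 1 -> QT (vact v g).
Proof.
rewrite /QT /Qtilde /Qbar vact_eta redV_va qdet_va => -> hd.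
by rewrite -!rmorphM -rmorphB -det_m22 -m22_eta hd rmorph1 qscal1.
Qed.

Lemma redV_vact v (g : 'M[E]_2) : redV red (vact v g) = va (redV red v) (red (g 0 0)) (red (g 0 1)) (red (g 1 0)) (red (g 1 1)).
Proof. by rewrite vact_eta redV_va. Qed.

Lemma IR_vact v (g : 'M[E]_2) : (forall i j, OE (g i j)) -> IR v -> IR (vact v g).
Proof. by move=> hg iv; rewrite /IR redV_vact; apply: Ok2_va => //; apply: Ob_red. Qed.

Lemma vact_adj v (g : 'M[E]_2) : \det g = 1 -> vact (vact v g) (adj2 g) = v.
Proof. by move=> h; rewrite vact_mul adj2_r // vact1. Qed.

Lemma adj2_OE (g : 'M[E]_2) : (forall i j, OE (g i j)) -> forall i j, OE (adj2 g i j).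
Proof.
move=> hg i j; rewrite /adj2 !mxE.
by case: (i : nat) => [|?]; case: (j : nat) => [|?] /=; rewrite ?hg //; apply: OEN.
Qed.

Lemma IR_vact_iff v (g : 'M[E]_2) : inSL2O OE g -> IR (vact v g) <-> IR v.
Proof.
move=> [hd hg]; split; last exact: IR_vact.
by move=> h; rewrite -(vact_adj v hd); apply: IR_vact => //; apply: adj2_OE.
Qed.

Lemma dlt_inv : SL2O_invariant red OE a b c0 dlt.
Proof.
move=> g hg v qv.
case: (pbP (IR v)) => iv; last first.
  by rewrite !dlt_nIR // => /(IR_vact_iff _ hg).
have [ol rl] := lftP iv.
have ivg : IR (vact v g) by apply/(IR_vact_iff _ hg).
case: hg => hd hg.
rewrite (dlt_any ivg (l := vact (lft v) g)).
- by rewrite vsub_vact B_vact hd mul1r dlt_IR.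
- by rewrite vact_eta; apply: OK2_va.
- by rewrite !redV_vact rl.
Qed.

Lemma Ob2inv : Ob (2%:R)^-1. Proof. by case: lfa => _ _ _ _ []. Qed.

Definition c1 := c0.1.
Definition c2 := c0.2.

Lemma hc1 : c1 = - (red a * c2) / 2%:R.
Proof.
move: Htr; rewrite /qtr /c1 /c2 => h.
have h2 := two_neq0.
apply: (mulfI h2); rewrite mulrCA mulrV ?unitfE // mulr1.
by apply/eqP; rewrite -subr_eq0 opprK; apply/eqP.
Qed.

Lemma nmb_mul z w : nmb (qmul (red a) (red b) z w).1 (qmul (red a) (red b) z w).2 = nmb z.1 z.2 * nmb w.1 w.2.
Proof. by case: z => ? ?; case: w => ? ?; rewrite /nmb /qmul /=; ring. Qed.

Lemma c2_facts : c2 != 0 /\ Ob c2^-1.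
Proof.
have [_ [d [[od1 od2] hd]]] := Hval.
have e1 : nmb c1 c2 * nmb d.1 d.2 = 1.
  by rewrite /c1 /c2 -nmb_mul hd /nmb /=; rewrite expr1n mulr0 expr0n /= mulr0 subr0 addr0.
have h2 := two_neq0.
have nc : c2 != 0.
  apply/eqP => c20.
  have : (0 : Ebar) = 1 by rewrite -e1 /nmb hc1 c20; ring.
  by move/eqP; rewrite eq_sym oner_eq0.
split => //.
have -> : c2^-1 = - (c2 * (red a ^+ 2 + 4%:R * red b) * (2%:R)^-1 ^+ 2 * nmb d.1 d.2).
  apply: (mulfI nc); rewrite mulfV //; apply: etrans (esym e1) _; rewrite /nmb hc1; field.
  by rewrite h2.
apply: ObN; apply: ObM; [apply: ObM; [apply: ObM|apply: ObX; exact: Ob2inv]|].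
- by case: Hval => -[] _ ? _.
- by apply: ObD; [apply: ObX; exact: Oba|apply: ObM; [exact: Obn|exact: Obb]].
- by rewrite /nmb; apply: ObB; [apply: ObD; [apply: ObX|apply: ObM; [apply: ObM => //; exact: Oba|]]|apply: ObM; [exact: Obb|apply: ObX]].
Qed.

Lemma Obc1 : Ob c1. Proof. by case: Hval => -[]. Qed.
Lemma Obc2 : Ob c2. Proof. by case: Hval => -[]. Qed.

Definition v0 : (E * E) * (E * E) := ((1, 0), (lf (c1 / 2%:R), lf (c2 / 2%:R))).

Lemma v0P : OK2 OE v0 /\ redV red v0 = ((1, 0), (c1 / 2%:R, c2 / 2%:R)).
Proof.
have [o1 r1] := lfP (ObM Obc1 Ob2inv); have [o2 r2] := lfP (ObM Obc2 Ob2inv).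
split; first by do !split => //=; [exact: OE1|exact: OE0].
by rewrite /redV /redK /= r1 r2 rmorph1 rmorph0.
Qed.

Lemma QT_v0 : QT v0.
Proof.
rewrite /QT /Qtilde /Qbar (proj2 v0P).
have h2 := two_neq0.
case E0 : c0 => [x y]; rewrite /c1 /c2 E0 /=.
have hx : x = - (red a * y) / 2%:R by move: hc1; rewrite /c1 /c2 E0.
qunf; rewrite hx; congr (_, _); field; by rewrite h2.
Qed.

Lemma dlt_v0 : dlt v0 = 1.
Proof.
have [o r] := v0P.
have [_ h] := dlt_delta QT_v0; apply: h => //; split; first exact: QT_v0.
rewrite r; do !split => /=; [exact: Ob1|exact: Ob0|exact: ObM Obc1 Ob2inv|exact: ObM Obc2 Ob2inv].
Qed.

Lemma trans_ex u : QT u -> IR u -> exists g, inSL2O OE g /\ redV red (vact v0 g) = redV red u.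
Proof.
move=> qu iu.
have [nc hc] := c2_facts.
have h2 := two_neq0.
move: qu iu; rewrite /QT /Qtilde /Qbar /IR.
case: (redV red u) => [[x1 x2] [x3 x4]] qu [[o1 o2] [o3 o4]] /=.
set r := 2%:R * x2 / c2; set p := x1 - r * c1 / 2%:R.
set s := 2%:R * x4 / c2; set q := x3 - s * c1 / 2%:R.
have Or : Ob r by apply: ObM => //; apply: ObM => //; exact: Obn.
have Os : Ob s by apply: ObM => //; apply: ObM => //; exact: Obn.
have Op : Ob p by apply: ObB => //; apply: ObM; [apply: ObM => //; exact: Obc1|exact: Ob2inv].
have Oq : Ob q by apply: ObB => //; apply: ObM; [apply: ObM => //; exact: Obc1|exact: Ob2inv].
have ev : va ((1, 0), (c1 / 2%:R, c2 / 2%:R)) p q r s = ((x1, x2), (x3, x4)).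
  rewrite /va /p /q /r /s; qunf; congr ((_, _), (_, _)); field; by rewrite nc h2.
have hdet : p * s - q * r = 1.
  have := qdet_va (red a) (red b) ((1, 0), (c1 / 2%:R, c2 / 2%:R)) p q r s.
  rewrite ev qu.
  have := QT_v0; rewrite /QT /Qtilde /Qbar (proj2 v0P) => ->.
  case E0 : c0 => [y1 y2] /= [_ e]; move: nc; rewrite /c2 E0 /= => nc.
  by apply: (mulIf nc); rewrite -e mul1r.
have [op rp] := lfP Op; have [oq rq] := lfP Oq.
have [or rr] := lfP Or; have [os rs] := lfP Os.
set p' := lf p in op rp *; set q' := lf q in oq rq *; set r' := lf r in or rr *; set s' := lf s in os rs *.
set D := p' * s' - q' * r'.
have oD : OE (D - 1) by apply: OEB; [apply: OEB; apply: OEM|exact: OE1].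
have rD : red (D - 1) = 0 by rewrite /D !rmorphB !rmorphM rp rq rr rs hdet rmorph1 subrr.
have [z [oz ez]] := (proj1 (kerOE oD)) rD.
exists (m22 (p' * (1 - N * z)) q' (r' * (1 - N * z)) s').
split; first split.
- rewrite /inSL2 det_m22.
  have -> : p' * (1 - N * z) * s' - q' * (r' * (1 - N * z)) = D * (1 - N * z) by rewrite /D; ring.
  have -> : D = 1 + N * z by rewrite -ez; ring.
  have -> : (1 + N * z) * (1 - N * z) = 1 - (N * N) * (z * z) by ring.
  by rewrite NN mul0r subr0.
- have o1z : OE (1 - N * z) by apply: OEB; [exact: OE1|apply: OEM => //; exact: OE_N].
  move=> i j; rewrite !mxE; case: (i : nat) => [|?]; case: (j : nat) => [|?] /=; by [apply: OEM|].
rewrite vact_m22 redV_va (proj2 v0P) -ev !rmorphM !rmorphB rmorph1 rmorphM redN mul0r subr0 !mulr1.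
by rewrite rp rq rr rs.
Qed.

Lemma chi m : ~ Ob (red m) -> exists y, OE y /\ psi (N * (y * m)) != 1.
Proof.
move=> hm.
have [_ _ _ [x [ox hx]]] := Hpsi.
have nm : red m != 0 by apply: contra_not_neq hm => ->; exact: Ob0.
have [u [n [hu hu' e]]] := val_ax nm.
have nu : u != 0 by apply: contraNneq nm => u0; rewrite e u0 mul0r.
case: n e => k e; rewrite ?NegzE -?exprnN -?exprnP in e.
  by exfalso; apply: hm; rewrite e; apply: ObM => //; apply: ObX; exact: Obpi.
set yb := red x * u^-1 * pi ^+ k.
have oyb : Ob yb by apply: ObM; [apply: ObM => //; exact: Ob_red|apply: ObX; exact: Obpi].
have [oy ry] := lfP oyb.
exists (lf yb); split => //.
have -> : N * (lf yb * m) = t^-1 * N * x; last exact: hx.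
have -> : t^-1 * N * x = N * (t^-1 * x) by ring.
apply: Nred.
rewrite rmorphM ry rmorphM rmorphV ?t_unit // e /yb exprS; field.
by rewrite nu expf_neq0 ?pi_neq0 // pi_neq0.
Qed.

Section Uniq.
Variable phi : (E * E) * (E * E) -> C.
Hypothesis EQ : forall v n, NK2 N n -> QT v -> QT (vadd v n) -> phi (vadd v n) = psi (B v n) * phi v.
Hypothesis INV : SL2O_invariant red OE a b c0 phi.

Lemma rep u g : QT u -> inSL2O OE g -> redV red (vact v0 g) = redV red u ->
  phi u = psi (B (vact v0 g) (vsub u (vact v0 g))) * phi v0.
Proof.
move=> qu hg rg.
have [w hw] := same_red (esym rg).
have q0 : QT (vact v0 g) by apply: QT_vact; [exact: QT_v0|case: hg].
have e : u = vadd (vact v0 g) (vscal N w) by rewrite -hw -vid3.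
have i0 : phi (vact v0 g) = phi v0 by apply: INV => //; exact: QT_v0.
rewrite {1}e EQ; first by rewrite i0 hw.
- exact: NK2_vscal.
- exact: q0.
- by rewrite -e.
Qed.


Definition nmE (z : E * E) := z.1 ^+ 2 + a * z.1 * z.2 - b * z.2 ^+ 2.

Lemma B_E12 u y : B u (vscal N ((0, 0), qscal y u.1)) = N * (y * nmE u.1).
Proof.
rewrite BZr; congr (_ * _).
have -> : B u ((0, 0), qscal y u.1) = (2%:R)^-1 * 2%:R * (y * nmE u.1).
  by case: u => [[? ?] [? ?]]; rewrite /Bform /nmE; qunf; ring.
by rewrite mulVr ?two_unit // mul1r.
Qed.
Lemma B_E21 u y : B u (vscal N (qscal y u.2, (0, 0))) = N * (y * - nmE u.2).
Proof.
rewrite BZr; congr (_ * _).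
have -> : B u (qscal y u.2, (0, 0)) = (2%:R)^-1 * 2%:R * (y * - nmE u.2).
  by case: u => [[? ?] [? ?]]; rewrite /Bform /nmE; qunf; ring.
by rewrite mulVr ?two_unit // mul1r.
Qed.

Lemma red_nmE z : red (nmE z) = nmb (red z.1) (red z.2).
Proof. by rewrite /nmE /nmb !rmorphB !rmorphD !rmorphM. Qed.

Lemma kill u g n y : QT u -> inSL2O OE g -> vact u g = vadd u (vscal N n) ->
  B u (vscal N n) = N * y -> psi (N * y) != 1 -> phi u = 0.
Proof.
move=> qu hg e hB hy.
have q1 : QT (vadd u (vscal N n)) by rewrite -e; apply: QT_vact => //; case: hg.
have := EQ (NK2_vscal n) qu q1; rewrite -e INV // hB => h.
have : (1 - psi (N * y)) * phi u = 0 by rewrite mulrBl mul1r {1}h subrr.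
by move/eqP; rewrite mulf_eq0 subr_eq0 eq_sym (negbTE hy) /= => /eqP.
Qed.

Lemma uniq_nIR u : QT u -> ~ IR u -> phi u = 0.
Proof.
move=> qu iu.
have [h1|h1] : ~ OKbar red OE (redK red u.1) \/ ~ OKbar red OE (redK red u.2).
  by case: (pbP (OKbar red OE (redK red u.1))) => h; [right => h'; apply: iu|left].
- have hm : ~ Ob (red (nmE u.1)).
    by rewrite red_nmE => /norm_int; apply: h1.
  have [y [oy hy]] := chi hm.
  apply: (kill (g := m22 1 (N * y) 0 1) qu _ _ (B_E12 u y) hy).
    split; first by rewrite /inSL2 det_m22 mulr1 mulr0 subr0.
    move=> i j; rewrite !mxE; case: (i : nat) => [|?]; case: (j : nat) => [|?] /=;
      [exact: OE1|apply: OEM => //; exact: OE_N|exact: OE0|exact: OE1].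
  rewrite vact_m22; case: u {qu iu h1 hm hy} => [[? ?] [? ?]]; rewrite /va /vadd /vscal; qunf; pring.
- have hm : ~ Ob (red (- nmE u.2)).
    by rewrite rmorphN red_nmE => /ObN; rewrite opprK => /norm_int; apply: h1.
  have [y [oy hy]] := chi hm.
  apply: (kill (g := m22 1 0 (N * y) 1) qu _ _ (B_E21 u y) hy).
    split; first by rewrite /inSL2 det_m22 mulr1 mul0r subr0.
    move=> i j; rewrite !mxE; case: (i : nat) => [|?]; case: (j : nat) => [|?] /=;
      [exact: OE1|exact: OE0|apply: OEM => //; exact: OE_N|exact: OE1].
  rewrite vact_m22; case: u {qu iu h1 hm hy} => [[? ?] [? ?]]; rewrite /va /vadd /vscal; qunf; pring.
Qed.

End Uniq.

Lemma uniq_all (phi : (E * E) * (E * E) -> C) :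
  (forall v n, NK2 N n -> QT v -> QT (vadd v n) -> phi (vadd v n) = psi (B v n) * phi v) ->
  SL2O_invariant red OE a b c0 phi ->
  forall u, QT u -> phi u = phi v0 * dlt u.
Proof.
move=> EQ INV u qu.
case: (pbP (IR u)) => iu; last by rewrite (uniq_nIR EQ INV qu iu) dlt_nIR // mulr0.
have [g [hg rg]] := trans_ex qu iu.
rewrite (rep EQ INV qu hg rg) (rep (phi := dlt) _ dlt_inv qu hg rg) ?dlt_v0 ?mulr1 1?mulrC //.
by move=> v n hn qv qvn; exact: dlt_eq.
Qed.

Definition KK (g : 'M[E]_2) := inSL2O OE g.

Lemma K_mul g h : KK g -> KK h -> KK (g *m h).
Proof.
move=> [dg og] [dh oh]; split; first by rewrite /inSL2 det_mulmx dg dh mulr1.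
move=> i j; rewrite !mxE !big_ord_recl big_ord0 addr0.
by apply: OED; apply: OEM.
Qed.
Lemma K_adj g : KK g -> KK (adj2 g).
Proof. by move=> [dg og]; split; [rewrite /inSL2 det_adj2|apply: adj2_OE]. Qed.
Lemma K_one : KK 1%:M.
Proof.
split; first by rewrite /inSL2 det1.
by move=> i j; rewrite !mxE; case: (i == j); [exact: OE1|exact: OE0].
Qed.

Lemma sc_refl h : same_coset OE h h.
Proof. by exists 1%:M; split; [exact: K_one|rewrite mulmx1]. Qed.
Lemma sc_sym h1 h2 : same_coset OE h1 h2 -> same_coset OE h2 h1.
Proof.
move=> [k [hk ->]]; exists (adj2 k); split; first exact: K_adj.
by rewrite -mulmxA adj2_r ?mulmx1 //; case: hk.
Qed.
Lemma sc_trans h1 h2 h3 : same_coset OE h1 h2 -> same_coset OE h2 h3 -> same_coset OE h1 h3.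
Proof.
move=> [k [hk ->]] [k' [hk' ->]]; exists (k' *m k); split; first exact: K_mul.
by rewrite mulmxA.
Qed.
Lemma sc_cancel g h1 h2 : KK g -> same_coset OE (g *m h1) (g *m h2) -> same_coset OE h1 h2.
Proof.
move=> [dg _] [k [hk e]]; exists k; split => //.
have := congr1 (mulmx (adj2 g)) e; rewrite !mulmxA adj2_l // !mul1mx //.
Qed.

Lemma diag_m22 : diag_t t = m22 t 0 0 t^-1.
Proof.
apply/matrixP => i j; rewrite !mxE.
by case: i => [[|[|i]] hi] //; case: j => [[|[|j]] hj].
Qed.
Lemma det_diag : \det (diag_t t) = 1.
Proof. by rewrite diag_m22 det_m22 mulr0 subr0 mulrV // t_unit. Qed.

Lemma dc_det h : in_double_coset OE t h -> \det h = 1.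
Proof. by move=> [k1 [k2 [[d1 _] [d2 _] ->]]]; rewrite !det_mulmx d1 d2 det_diag !mulr1. Qed.

Lemma dc_mul g h : KK g -> in_double_coset OE t h -> in_double_coset OE t (g *m h).
Proof.
move=> hg [k1 [k2 [h1 h2 ->]]]; exists (g *m k1), k2; split => //; first exact: K_mul.
by rewrite !mulmxA.
Qed.

Lemma vact_N w g : vact (vscal N w) g = vscal N (vact w g).
Proof. rewrite !vact_eta; case: w => [[? ?] [? ?]]; rewrite /va /vscal; qunf; pring. Qed.

Section Hecke.
Variable L : seq 'M[E]_2.
Hypothesis HL : coset_reps OE t L.

Lemma hecke_eq v n : NK2 N n -> QT v -> QT (vadd v n) ->
  hecke L dlt (vadd v n) = psi (B v n) * hecke L dlt v.
Proof.
move=> /NK2_ex [w ->] qv qvn; rewrite /hecke big_distrr /=.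
apply: eq_big_seq => h hh.
have dh : \det h = 1 by case: HL => H _ _; apply: dc_det; apply: H.
rewrite -vadd_vact vact_N dlt_eq.
- by rewrite -vact_N B_vact dh mul1r.
- exact: NK2_vscal.
- exact: QT_vact.
- by rewrite -vact_N vadd_vact; apply: QT_vact.
Qed.

Lemma hecke_inv : SL2O_invariant red OE a b c0 (hecke L dlt).
Proof.
move=> g hg v qv; rewrite /hecke.
case: HL => Hin Hcov Hdis.
set n := size L.
have ex (i : 'I_n) : exists j : 'I_n, pb (same_coset OE (g *m nth 0 L i) (nth 0 L j)).
  have := Hcov (g *m nth 0 L i) (dc_mul hg (Hin _ (mem_nth 0 (ltn_ord i)))).
  case=> h' hh' sc.
  have hj : (index h' L < n)%N by rewrite index_mem.
  by exists (Ordinal hj); apply/pbP; rewrite /= nth_index.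
pose sg i := xchoose (ex i).
have sgP (i : 'I_n) : same_coset OE (g *m nth 0 L i) (nth 0 L (sg i)) by apply/pbP; exact: (xchooseP (ex i)).
have sg_inj : injective sg.
  move=> i j e; apply: val_inj; apply: Hdis; [exact: ltn_ord|exact: ltn_ord|].
  apply: (sc_cancel hg); apply: sc_trans (sgP i) _; rewrite e; exact: sc_sym (sgP j).
rewrite (big_nth 0) [RHS](big_nth 0) !big_mkord.
rewrite [RHS](reindex_inj sg_inj) /=.
apply: eq_bigr => i _.
have [k [hk ek]] := sgP i.
have hLs : in_double_coset OE t (nth 0 L (sg i)) by apply: Hin; apply: mem_nth; exact: ltn_ord.
have q1 : QT (vact v (nth 0 L (sg i))) by apply: QT_vact => //; apply: dc_det.
rewrite vact_mul ek -vact_mul; exact: (dlt_inv hk q1).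
Qed.


Lemma qdet_scal2 (z x : Ebar * Ebar) e : qdet (red a) (red b) (z, qscal e x) = qscal e (qdet (red a) (red b) (z, x)).
Proof. case: z => ? ?; case: x => ? ?; qunf; pring. Qed.
Lemma qmul_scal (z d : Ebar * Ebar) e : qmul (red a) (red b) (qscal e z) d = qscal e (qmul (red a) (red b) z d).
Proof. case: z => ? ?; case: d => ? ?; qunf; pring. Qed.

Lemma not_IR_dc h : in_double_coset OE t h -> ~ IR (vact v0 h).
Proof.
move=> [k1 [k2 [hk1 hk2 eh]]] ih.
have i1 : IR (vact v0 (k1 *m diag_t t)).
  have -> : vact v0 (k1 *m diag_t t) = vact (vact v0 h) (adj2 k2).
    by rewrite vact_mul eh -mulmxA adj2_r ?mulmx1 //; case: hk2.
  by apply: IR_vact => //; apply: adj2_OE; case: hk2.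
set w := vact v0 k1.
have qw : QT w by apply: QT_vact; [exact: QT_v0|case: hk1].
have ow : OK2 OE w by rewrite /w vact_eta; case: hk1 => _ o; apply: OK2_va => //; exact: (proj1 v0P).
move: i1; rewrite -vact_mul -/w diag_m22 /IR redV_vact !mxE /= rmorph0 rmorphV ?t_unit //.
move: qw; rewrite /QT /Qtilde /Qbar.
case: ow; case: w => [[p1 p2] [p3 p4]] [[op1 op2] [op3 op4]] /=.
rewrite /redV /redK /= => qw [_ [hy1 hy2]].
rewrite /va /qadd /qscal /= !mul0r !add0r in hy1 hy2.
set x := (pi^-1 * red p3, pi^-1 * red p4).
have ex : (red p3, red p4) = qscal pi x by rewrite /x /qscal /= !mulrA mulrV ?unitfE ?pi_neq0 // !mul1r.
have oz1 := Ob_red op1; have oz2 := Ob_red op2.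
have [_ [d [od hd]]] := Hval.
move: qw; rewrite ex qdet_scal2 => ec.
have oxs : OKbar red OE (qdet (red a) (red b) ((red p1, red p2), x)).
  by apply: Ok_det; split; split.
apply: pinv_notO.
have := hd; rewrite -ec qmul_scal; set s := qmul _ _ _ d => hs.
have hs1 : pi * s.1 = 1 by move: hs; rewrite /qscal => -[].
have -> : pi^-1 = s.1 by apply: (mulfI pi_neq0); rewrite mulfV ?pi_neq0 // hs1.
by have [] := Ok_mul oxs od.
Qed.

Lemma hecke_v0 : hecke L dlt v0 = 0.
Proof.
rewrite /hecke big_seq big1 // => h hh.
by apply: dlt_nIR; apply: not_IR_dc; case: HL => H _ _; apply: H.
Qed.

Lemma hecke_zero u : QT u -> hecke L dlt u = 0.
Proof.
move=> qu; rewrite (uniq_all _ hecke_inv qu) ?hecke_v0 ?mul0r //.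
by move=> v n hn qv qvn; exact: hecke_eq.
Qed.
End Hecke.

Fixpoint dd (s : seq 'M[E]_2) : seq 'M[E]_2 :=
  match s with
  | [::] => [::]
  | x :: s' => let r := dd s' in
      if has (fun y => pb (same_coset OE x y)) r then r else x :: r
  end.

Lemma dd_sub s x : x \in dd s -> x \in s.
Proof.
elim: s => [|y s IH] //=.
case: ifP => _; first by move=> /IH h; rewrite in_cons h orbT.
by rewrite !in_cons => /orP[->//|/IH ->]; rewrite orbT.
Qed.

Lemma dd_cov s x : x \in s -> exists2 y, y \in dd s & same_coset OE x y.
Proof.
elim: s => [|y s IH] //=.
rewrite in_cons => /orP[/eqP ->|/IH [z hz sz]].
  case: ifP => [/hasP [z hz /pbP sz]|_]; first by exists z.
  by exists y; [rewrite in_cons eqxx|exact: sc_refl].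
by case: ifP => _; exists z => //; rewrite in_cons hz orbT.
Qed.

Lemma dd_dis s i j : (i < size (dd s))%N -> (j < size (dd s))%N ->
  same_coset OE (nth 0 (dd s) i) (nth 0 (dd s) j) -> i = j.
Proof.
elim: s i j => [|y s IH] i j //=.
case: ifP => hh; first exact: IH.
have nh z : z \in dd s -> ~ same_coset OE y z.
  by move=> hz sz; move/negP: hh; apply; apply/hasP; exists z => //; apply/pbP.
case: i => [|i]; case: j => [|j] //= hi hj.
- by move=> sc; exfalso; apply: (nh _ (mem_nth 0 hj) sc).
- by move=> sc; exfalso; apply: (nh _ (mem_nth 0 hi)); apply: sc_sym.
- by move=> sc; congr S; apply: IH.
Qed.

Lemma CONG k k1 z1 z2 z3 z4 : KK k -> KK k1 -> OE z1 -> OE z2 -> OE z3 -> OE z4 ->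
  k1 0 0 = k 0 0 + t * t * z1 -> k1 0 1 = k 0 1 + t * t * z2 ->
  k1 1 0 = k 1 0 + t * t * z3 -> k1 1 1 = k 1 1 + t * t * z4 ->
  same_coset OE (k1 *m diag_t t) (k *m diag_t t).
Proof.
move=> hk hk1 o1 o2 o3 o4 e1 e2 e3 e4.
set dinv := m22 t^-1 0 0 t.
have tu := t_unit.
have tt : t * t^-1 = 1 by rewrite mulrV.
have hdd : diag_t t *m dinv = 1%:M by rewrite diag_m22 mul_m22 m22_1; apply: m22_eq; rewrite ?mulr0 ?mul0r ?addr0 ?add0r ?mulrV ?mulVr.
exists (dinv *m (adj2 k *m k1) *m diag_t t); split; last first.
  rewrite -!mulmxA (mulmxA (diag_t t)) hdd mul1mx !mulmxA adj2_r ?mul1mx //; by case: hk.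
split.
  rewrite /inSL2 !det_mulmx det_adj2 det_diag /dinv det_m22.
  by case: hk => -> _; case: hk1 => -> _; rewrite mulr0 subr0 mulVr // !mulr1.
case: hk => _ ok; case: hk1 => _ ok1.
have oa := adj2_OE ok.
rewrite /dinv /adj2 diag_m22 (m22_eta k1) e1 e2 e3 e4 !mul_m22 => i j; rewrite !mxE.
case: (i : nat) => [|?]; case: (j : nat) => [|?] /=.
- have -> : (t^-1 * (k 1 1 * (k 0 0 + t * t * z1) + - k 0 1 * (k 1 0 + t * t * z3)) +
     0 * (- k 1 0 * (k 0 0 + t * t * z1) + k 0 0 * (k 1 0 + t * t * z3))) * t +
    (t^-1 * (k 1 1 * (k 0 1 + t * t * z2) + - k 0 1 * (k 1 1 + t * t * z4)) +
     0 * (- k 1 0 * (k 0 1 + t * t * z2) + k 0 0 * (k 1 1 + t * t * z4))) * 0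
    = (t * t^-1) * (k 1 1 * (k 0 0 + t * t * z1) + - k 0 1 * (k 1 0 + t * t * z3)) by ring.
  rewrite tt mul1r; apply: OED; apply: OEM; rewrite ?ok //; try apply: OEN; rewrite ?ok //;
  apply: OED; rewrite ?ok //; apply: OEM => //; apply: OEM; exact: OE_t.
- have -> : (t^-1 * (k 1 1 * (k 0 0 + t * t * z1) + - k 0 1 * (k 1 0 + t * t * z3)) +
     0 * (- k 1 0 * (k 0 0 + t * t * z1) + k 0 0 * (k 1 0 + t * t * z3))) * 0 +
    (t^-1 * (k 1 1 * (k 0 1 + t * t * z2) + - k 0 1 * (k 1 1 + t * t * z4)) +
     0 * (- k 1 0 * (k 0 1 + t * t * z2) + k 0 0 * (k 1 1 + t * t * z4))) * t^-1
    = (t * t^-1) * (t * t^-1) * (k 1 1 * z2 - k 0 1 * z4) by ring.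
  by rewrite tt !mul1r; apply: OEB; apply: OEM.
- have -> : (0 * (k 1 1 * (k 0 0 + t * t * z1) + - k 0 1 * (k 1 0 + t * t * z3)) +
     t * (- k 1 0 * (k 0 0 + t * t * z1) + k 0 0 * (k 1 0 + t * t * z3))) * t +
    (0 * (k 1 1 * (k 0 1 + t * t * z2) + - k 0 1 * (k 1 1 + t * t * z4)) +
     t * (- k 1 0 * (k 0 1 + t * t * z2) + k 0 0 * (k 1 1 + t * t * z4))) * 0
    = t * t * (- k 1 0 * (k 0 0 + t * t * z1) + k 0 0 * (k 1 0 + t * t * z3)) by ring.
  have ot := OE_t.
  apply: OEM; first exact: OEM.
  apply: OED; apply: OEM; rewrite ?ok //; try apply: OEN; rewrite ?ok //;
  apply: OED; rewrite ?ok //; apply: OEM => //; apply: OEM; exact: OE_t.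
- have -> : (0 * (k 1 1 * (k 0 0 + t * t * z1) + - k 0 1 * (k 1 0 + t * t * z3)) +
     t * (- k 1 0 * (k 0 0 + t * t * z1) + k 0 0 * (k 1 0 + t * t * z3))) * 0 +
    (0 * (k 1 1 * (k 0 1 + t * t * z2) + - k 0 1 * (k 1 1 + t * t * z4)) +
     t * (- k 1 0 * (k 0 1 + t * t * z2) + k 0 0 * (k 1 1 + t * t * z4))) * t^-1
    = (t * t^-1) * (- k 1 0 * (k 0 1 + t * t * z2) + k 0 0 * (k 1 1 + t * t * z4)) by ring.
  rewrite tt mul1r; apply: OED; apply: OEM; rewrite ?ok //; try apply: OEN; rewrite ?ok //;
  apply: OED; rewrite ?ok //; apply: OEM => //; apply: OEM; exact: OE_t.
Qed.

Lemma res_fin : exists rs : seq Ebar, forall x, Ob x ->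
  exists r, [/\ r \in rs, Ob r & exists y, Ob y /\ x - r = pi * y].
Proof. by case: lfa. Qed.

Lemma modt (rs : seq Ebar) :
  (forall x, Ob x -> exists r, [/\ r \in rs, Ob r & exists y, Ob y /\ x - r = pi * y]) ->
  forall x, OE x -> exists2 s, s \in [seq lf r + N * lf r' | r <- rs, r' <- rs] &
    exists y, OE y /\ x = s + t * y.
Proof.
move=> Hrs x ox.
have [r [hr or [y0 [oy0 e0]]]] := Hrs _ (Ob_red ox).
have [olr rlr] := lfP or; have [oly rly] := lfP oy0.
have ox1 : OE (x - lf r - t * lf y0) by apply: OEB; [apply: OEB|apply: OEM => //; exact: OE_t].
have rx1 : red (x - lf r - t * lf y0) = 0.
  by rewrite !rmorphB rmorphM rlr rly -e0 subrr.
have [z [oz ez]] := (proj1 (kerOE ox1)) rx1.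
have [r' [hr' or' [y2 [oy2 e2]]]] := Hrs _ (Ob_red oz).
have [olr' rlr'] := lfP or'; have [oly2 rly2] := lfP oy2.
have oz2 : OE (z - lf r' - t * lf y2) by apply: OEB; [apply: OEB|apply: OEM => //; exact: OE_t].
have rz2 : red (z - lf r' - t * lf y2) = 0.
  by rewrite !rmorphB rmorphM rlr' rly2 -e2 subrr.
have [z2 [oz2' ez2]] := (proj1 (kerOE oz2)) rz2.
exists (lf r + N * lf r'); first by apply: allpairs_f.
exists (lf y0 + N * lf y2); split; first by apply: OED => //; apply: OEM => //; exact: OE_N.
have hz : z = lf r' + t * lf y2 + N * z2 by rewrite -ez2; ring.
have hx : x = lf r + t * lf y0 + N * z by rewrite -ez; ring.
rewrite hx hz.
have -> : N * (lf r' + t * lf y2 + N * z2) = N * lf r' + N * t * lf y2 + (N * N) * z2 by ring.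
rewrite NN mul0r addr0; ring.
Qed.

Lemma modt2 (S1 : seq E) : (forall x, OE x -> exists2 s, s \in S1 & exists y, OE y /\ x = s + t * y) ->
  forall x, OE x -> exists2 s, s \in [seq s + t * s' | s <- S1, s' <- S1] &
    exists y, OE y /\ x = s + t * t * y.
Proof.
move=> H x ox.
have [s hs [y [oy ey]]] := H x ox.
have [s' hs' [y' [oy' ey']]] := H y oy.
exists (s + t * s'); first by apply: allpairs_f.
by exists y'; split => //; rewrite ey ey'; ring.
Qed.

Definition cong (k : 'M[E]_2) (tu : (E * E) * (E * E)) :=
  [/\ exists z, OE z /\ k 0 0 = tu.1.1 + t * t * z, exists z, OE z /\ k 0 1 = tu.1.2 + t * t * z,
      exists z, OE z /\ k 1 0 = tu.2.1 + t * t * z & exists z, OE z /\ k 1 1 = tu.2.2 + t * t * z].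

Definition cho tu := epsilon (inhabits 0) (fun k => KK k /\ cong k tu).
Definition cand tu := if pb (exists k, KK k /\ cong k tu) then cho tu *m diag_t t else diag_t t.

Lemma cand_dc tu : in_double_coset OE t (cand tu).
Proof.
rewrite /cand; case: pbP => h.
  have [hk _] := epsilon_spec (inhabits 0) (fun k => KK k /\ cong k tu) h.
  by exists (cho tu), 1%:M; split => //; [exact: K_one|rewrite mulmx1].
by exists 1%:M, 1%:M; split; [exact: K_one|exact: K_one|rewrite mulmx1 mul1mx].
Qed.

Lemma exists_reps : exists L, coset_reps OE t L.
Proof.
have [rs Hrs] := res_fin.
set S1 := [seq lf r + N * lf r' | r <- rs, r' <- rs].
set S2 := [seq s + t * s' | s <- S1, s' <- S1].
have H2 := modt2 (modt Hrs).
set P2 := [seq (p, q) | p <- S2, q <- S2].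
set T4 := [seq (x, y) | x <- P2, y <- P2].
set Cl := map cand T4.
exists (dd Cl); split.
- move=> h /dd_sub /mapP [tu _ ->]; exact: cand_dc.
- move=> h [k1 [k2 [hk1 hk2 eh]]].
  have ok1 := proj2 hk1.
  have [s00 h00 [y00 [o00 e00]]] := H2 _ (ok1 0 0).
  have [s01 h01 [y01 [o01 e01]]] := H2 _ (ok1 0 1).
  have [s10 h10 [y10 [o10 e10]]] := H2 _ (ok1 1 0).
  have [s11 h11 [y11 [o11 e11]]] := H2 _ (ok1 1 1).
  set tu := ((s00, s01), (s10, s11)).
  have htu : tu \in T4 by apply: allpairs_f; apply: allpairs_f.
  have hex : exists k, KK k /\ cong k tu.
    by exists k1; split => //; split; [exists y00|exists y01|exists y10|exists y11].
  have [hk [[z00 [q00 f00]] [z01 [q01 f01]] [z10 [q10 f10]] [z11 [q11 f11]]]] :=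
    epsilon_spec (inhabits 0) (fun k => KK k /\ cong k tu) hex.
  have sc : same_coset OE h (cand tu).
    apply: (sc_trans (h2 := k1 *m diag_t t)); first by exists k2; split.
    rewrite /cand; case: pbP => // _.
    apply: (CONG (z1 := y00 - z00) (z2 := y01 - z01) (z3 := y10 - z10) (z4 := y11 - z11)) => //;
      try (apply: OEB => //).
    + by rewrite e00 -/(cho tu) f00 /=; ring.
    + by rewrite e01 -/(cho tu) f01 /=; ring.
    + by rewrite e10 -/(cho tu) f10 /=; ring.
    + by rewrite e11 -/(cho tu) f11 /=; ring.
  have [y hy sy] := dd_cov (map_f cand htu).
  by exists y => //; apply: sc_trans sc sy.
- exact: dd_dis.
Qed.

Lemma delta_eq (delta : (E * E) * (E * E) -> C) :
  in_F red OE N t a b psi c0 delta -> is_delta_O red OE a b c0 delta ->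
  forall u, QT u -> delta u = dlt u.
Proof.
move=> [_ EQ _] HD u qu.
case: (pbP (IR u)) => iu; last first.
  by rewrite dlt_nIR //; apply: (proj1 (HD u qu)) => -[].
have [ol rl] := lftP iu.
have [w hw] := same_red (esym rl).
have ql : QT (lft u) by rewrite /QT /Qtilde rl.
have e : u = vadd (lft u) (vscal N w) by rewrite -hw -vid3.
have q1 : QT (vadd (lft u) (vscal N w)) by rewrite -e.
have hE := EQ _ _ (NK2_vscal w) ql q1.
rewrite -e in hE; rewrite hE.
have -> : delta (lft u) = 1.
  by apply: (proj2 (HD _ ql)); [exact: ol|split; [exact: ql|rewrite rl; exact: iu]].
by rewrite mulr1 dlt_IR // hw.
Qed.

Lemma main :
  (exists delta, in_F red OE N t a b psi c0 delta /\ is_delta_O red OE a b c0 delta)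
  /\
  (forall delta : (E * E) * (E * E) -> C,
     in_F red OE N t a b psi c0 delta -> is_delta_O red OE a b c0 delta ->
     [/\ SL2O_invariant red OE a b c0 delta,
         (exists v, Qtilde red a b c0 v /\ delta v != 0),
         (forall phi, in_F red OE N t a b psi c0 phi ->
            SL2O_invariant red OE a b c0 phi ->
            exists c : C, forall v, Qtilde red a b c0 v -> phi v = c * delta v) &
         (exists L, coset_reps OE t L) /\
         (forall L, coset_reps OE t L ->
            forall v, Qtilde red a b c0 v -> hecke L delta v = 0)]).
Proof.
split; first by exists dlt; split; [exact: dlt_inF|exact: dlt_delta].
move=> delta hF hD.
have de := delta_eq hF hD.
split.
- move=> g hg v qv; rewrite !de //; first exact: dlt_inv.
  by apply: QT_vact => //; case: hg.
- by exists v0; split; [exact: QT_v0|rewrite de ?dlt_v0 ?oner_neq0 //; exact: QT_v0].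
- move=> phi [_ EQ _] INV; exists (phi v0) => v qv.
  by rewrite (uniq_all EQ INV qv) de.
- split; first exact: exists_reps.
  move=> L HL v qv.
  rewrite -(hecke_zero HL qv) /hecke; apply: eq_big_seq => h hh.
  apply: de; apply: QT_vact => //; apply: dc_det.
  by case: HL => H _ _; apply: H.
Qed.

End Base.

Theorem proposition4p8
  (E : comUnitRingType) (Ebar : fieldType) (red : {rmorphism E -> Ebar})
  (OE : pred E) (N t : E)
  (Hset : setting_axioms red OE N t)
  (a b : E) (Hunr : unramified_quadratic red OE t a b)
  (R : realType) (psi : E -> R[i]) (Hpsi : good_character OE N t psi)
  (c0 : Ebar * Ebar)
  (Htr : qtr (red a) c0 = 0)
  (Hval : OKbar red OE c0 /\
          exists d, OKbar red OE d /\ qmul (red a) (red b) c0 d = (1, 0)) :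
  (* delta_O exists in F_{c0} *)
  (exists delta, in_F red OE N t a b psi c0 delta /\ is_delta_O red OE a b c0 delta)
  /\
  (forall delta : (E * E) * (E * E) -> R[i],
     in_F red OE N t a b psi c0 delta -> is_delta_O red OE a b c0 delta ->
     (* (i) F_{c0}^{SL2(O_E)} is one-dimensional, spanned by delta_O *)
     [/\ SL2O_invariant red OE a b c0 delta,
         (exists v, Qtilde red a b c0 v /\ delta v != 0),
         (forall phi, in_F red OE N t a b psi c0 phi ->
            SL2O_invariant red OE a b c0 phi ->
            exists c : R[i], forall v, Qtilde red a b c0 v -> phi v = c * delta v) &
     (* (ii) T_1(t) delta_O = 0 *)
         (exists L, coset_reps OE t L) /\
         (forall L, coset_reps OE t L ->
            forall v, Qtilde red a b c0 v -> hecke L delta v = 0)]).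
Proof. exact: (main Hset Hunr Hpsi Htr Hval). Qed.
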